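(* Assume that $q$ is not a root of unity. Then the center $Z(\Delta)$ is generated (as an $\mathbb F$-algebra) by $\Omega,\alpha,\beta,\gamma$.
   Context: Let $\mathbb F$ be a field and fix a nonzero $q\in\mathbb F$ with $q^4\neq 1$. The universal Askey--Wilson algebra $\Delta$ is the associative $\mathbb F$-algebra with 1 with generators $A,B,C$ subject to the relations that each of $A+\frac{qBC-q^{-1}CB}{q^2-q^{-2}}$, $B+\frac{qCA-q^{-1}AC}{q^2-q^{-2}}$, $C+\frac{qAB-q^{-1}BA}{q^2-q^{-2}}$ is central; $\alpha,\beta,\gamma$ denote these three central elements (in order) each multiplied by $q+q^{-1}$. Let $\Omega = qABC+q^2A^2+q^{-2}B^2+q^2C^2-qA\alpha-q^{-1}B\beta-qC\gamma$. *)

(* Defs.v *)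
From HB Require Import structures.
From mathcomp Require Import all_boot all_order all_algebra.
Set Implicit Arguments. Unset Strict Implicit. Unset Printing Implicit Defensive.
Import GRing.Theory.
Local Open Scope ring_scope.

Definition central (D : nzRingType) (x : D) : Prop := forall y : D, x * y = y * x.

Section AW.
Variables (F : fieldType) (q : F).

Definition aw_cA (D : algType F) (A B C : D) : D :=
  A + (q ^+ 2 - q ^- 2)^-1 *: (q *: (B * C) - q^-1 *: (C * B)).
Definition aw_cB (D : algType F) (A B C : D) : D :=
  B + (q ^+ 2 - q ^- 2)^-1 *: (q *: (C * A) - q^-1 *: (A * C)).
Definition aw_cC (D : algType F) (A B C : D) : D :=
  C + (q ^+ 2 - q ^- 2)^-1 *: (q *: (A * B) - q^-1 *: (B * A)).

Definition aw_alpha (D : algType F) (A B C : D) : D := (q + q^-1) *: aw_cA A B C.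
Definition aw_beta  (D : algType F) (A B C : D) : D := (q + q^-1) *: aw_cB A B C.
Definition aw_gamma (D : algType F) (A B C : D) : D := (q + q^-1) *: aw_cC A B C.

Definition aw_Omega (D : algType F) (A B C : D) : D :=
  q *: (A * B * C) + q ^+ 2 *: (A * A) + q ^- 2 *: (B * B) + q ^+ 2 *: (C * C)
  - q *: (A * aw_alpha A B C) - q^-1 *: (B * aw_beta A B C)
  - q *: (C * aw_gamma A B C).

Definition AW_rels (D : algType F) (A B C : D) : Prop :=
  [/\ central (aw_cA A B C), central (aw_cB A B C) & central (aw_cC A B C)].

Definition alg_hom (D E : algType F) (f : D -> E) : Prop :=
  [/\ forall x y, f (x + y) = f x + f y,
      forall x y, f (x * y) = f x * f y,
      f 1 = 1 & forall (k : F) x, f (k *: x) = k *: f x].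

End AW.

Inductive in_subalg (F : fieldType) (D : algType F) (gens : seq D) : D -> Prop :=
  | sa_gen x : x \in gens -> in_subalg gens x
  | sa_one : in_subalg gens 1
  | sa_add x y : in_subalg gens x -> in_subalg gens y -> in_subalg gens (x + y)
  | sa_mul x y : in_subalg gens x -> in_subalg gens y -> in_subalg gens (x * y)
  | sa_scale (k : F) x : in_subalg gens x -> in_subalg gens (k *: x).

(* (D, A, B, C) is the universal Askey--Wilson algebra Delta: the relations
   hold, D is generated by A, B, C, and for every F-algebra E with elements
   a, b, c satisfying the relations there is an algebra homomorphism D -> E
   sending A, B, C to a, b, c (unique, since A, B, C generate D).  This
   characterizes Delta up to isomorphism. *)
Definition is_universal_AW (F : fieldType) (q : F) (D : algType F) (A B C : D) : Prop :=
  [/\ AW_rels q A B C,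
      forall x : D, in_subalg [:: A; B; C] x &
      forall (E : algType F) (a b c : E), AW_rels q a b c ->
        exists f : D -> E, [/\ alg_hom f, f A = a, f B = b & f C = c]].

(* Main.v *)
Require Import Defs.
From HB Require Import structures.
From mathcomp Require Import all_boot all_order all_algebra.
From mathcomp Require ring.
From mathcomp Require zify.
From mathcomp.classical Require boolp.
From mathcomp.multinomials Require ssrcomplements mpoly.
Import GRing.Theory.
Local Open Scope ring_scope.

Set Implicit Arguments. Unset Strict Implicit. Unset Printing Implicit Defensive.

Module L.
Import ring.
Import GRing.Theory.
Local Open Scope ring_scope.

Section LinNorm.
Variables (K : fieldType) (M : lmodType K).

Inductive lexp : Type := LV of nat | L0 | LA of lexp & lexp | LN of lexp | LS of K & lexp.

Fixpoint leval (env : seq M) (e : lexp) : M :=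
  match e with
  | LV i => nth 0 env i
  | L0 => 0
  | LA a b => leval env a + leval env b
  | LN a => - leval env a
  | LS c a => c *: leval env a
  end.

Fixpoint lco (e : lexp) (j : nat) : K :=
  match e with
  | LV i => if i == j then 1 else 0
  | L0 => 0
  | LA a b => lco a j + lco b j
  | LN a => - lco a j
  | LS c a => c * lco a j
  end.

Lemma leval_lco env e : leval env e = \sum_(j < size env) lco e j *: nth 0 env j.
Proof.
elim: e => [i||a IHa b IHb|a IHa|c a IHa] /=.
- case: (ltnP i (size env)) => hi.
    rewrite (bigD1 (Ordinal hi)) //= eqxx scale1r big1 ?addr0 // => j /eqP hj.
    case: eqP => [e|]; last by rewrite scale0r.
    by exfalso; apply: hj; apply: val_inj; rewrite /= e.
  rewrite nth_default // big1 // => j _; case: eqP => [e|]; last by rewrite scale0r.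
  by move: (ltn_ord j); rewrite -e ltnNge hi.
- by rewrite big1 // => j _; rewrite scale0r.
- by rewrite IHa IHb -big_split /=; apply: eq_bigr => j _; rewrite scalerDl.
- by rewrite IHa -sumrN; apply: eq_bigr => j _; rewrite scaleNr.
- by rewrite IHa scaler_sumr; apply: eq_bigr => j _; rewrite scalerA.
Qed.

Fixpoint allj (N : nat) (P : nat -> Prop) : Prop :=
  match N with 0 => True | N'.+1 => allj N' P /\ P N' end.

Lemma allj_P N P : allj N P -> forall j, (j < N)%N -> P j.
Proof.
elim: N => [//|N IH] /= [h1 h2] j; rewrite ltnS leq_eqVlt; case/orP => [/eqP -> //|].
exact: IH.
Qed.

Lemma lin_eq_all env e1 e2 : allj (size env) (fun j => lco e1 j = lco e2 j) ->
  leval env e1 = leval env e2.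
Proof.
move/allj_P => H; rewrite !leval_lco; apply: eq_bigr => j _.
by rewrite H.
Qed.

End LinNorm.

Ltac lin_eqb h x := constr:(ltac:(first [ unify h x; exact true | exact false ]) : bool).

Ltac lin_find x env :=
  lazymatch env with
  | ?h :: ?env' => let b := lin_eqb h x in
                   lazymatch b with
                   | true => constr:(0%N)
                   | false => let n := lin_find x env' in constr:(n.+1)
                   end
  end.

Ltac lin_memb x env :=
  lazymatch env with
  | nil => constr:(false)
  | ?h :: ?env' => let b := lin_eqb h x in
                   lazymatch b with
                   | true => constr:(true)
                   | false => lin_memb x env'
                   end
  end.

Ltac lin_app env x :=
  lazymatch env with
  | nil => constr:(x :: nil)
  | ?h :: ?tl => let tl' := lin_app tl x in constr:(h :: tl')
  end.

Ltac lin_atoms t env :=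
  lazymatch t with
  | (?a + ?b)%R => let env := lin_atoms a env in lin_atoms b env
  | (- ?a)%R => lin_atoms a env
  | (?c *: ?a)%R => lin_atoms a env
  | 0%R => env
  | _ => let b := lin_memb t env in
         lazymatch b with true => env | false => lin_app env t end
  end.

Ltac lin_reify K t env :=
  lazymatch t with
  | (?a + ?b)%R => let ea := lin_reify K a env in let eb := lin_reify K b env in
                   constr:(@LA K ea eb)
  | (- ?a)%R => let ea := lin_reify K a env in constr:(@LN K ea)
  | (?c *: ?a)%R => let ea := lin_reify K a env in constr:(@LS K c ea)
  | 0%R => constr:(@L0 K)
  | _ => let i := lin_find t env in constr:(@LV K i)
  end.

Ltac lin K :=
  lazymatch goal with
  | |- @eq ?T ?l ?r =>
    let env0 := constr:(@nil T) in
    let env1 := lin_atoms l env0 in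
    let env := lin_atoms r env1 in
    let e1 := lin_reify K l env in
    let e2 := lin_reify K r env in
    apply: (@lin_eq_all K T env e1 e2); cbv [allj lco size]; rewrite ?eqnE /=
  end.


End L.
Import L.

Module R1.
Import ssrcomplements mpoly.
Import GRing.Theory.
Local Open Scope ring_scope.

Section Lext.
Variable (F : fieldType) (n : nat).
Local Notation V := {mpoly F[n]}.

Definition lext (g : 'X_{1..n} -> V) (p : V) : V := \sum_(m <- msupp p) p@_m *: g m.

Lemma lextE g k p : (msize p <= k)%N ->
  lext g p = \sum_(m : 'X_{1..n < k}) p@_m *: g m.
Proof.
move=> le_pi; set I : subFinType _ := 'X_{1..n < k}.
rewrite /lext (big_mksub I) ?msupp_uniq //=; first last.
  by move=> x /msize_mdeg_lt /leq_trans; apply.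
rewrite big_rmcond //= => j /memN_msupp_eq0 ->.
by rewrite scale0r.
Qed.

Lemma lextD g : {morph lext g : x y / x + y}.
Proof.
move=> x y; set k := maxn (msize x) (msize y).
have hx : (msize x <= k)%N by rewrite leq_maxl.
have hy : (msize y <= k)%N by rewrite leq_maxr.
have hxy : (msize (x + y) <= k)%N by apply: leq_trans (msizeD_le _ _) _.
rewrite !(lextE g hx, lextE g hy, lextE g hxy) -big_split /=.
by apply: eq_bigr => m _; rewrite mcoeffD scalerDl.
Qed.

Lemma lextZ g c x : lext g (c *: x) = c *: lext g x.
Proof.
have hx : (msize x <= msize x)%N by [].
have hcx : (msize (c *: x) <= msize x)%N by apply: msizeZ_le.
rewrite (lextE g hx) (lextE g hcx) scaler_sumr; apply: eq_bigr => m _.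
by rewrite mcoeffZ scalerA.
Qed.

Lemma lext0 g : lext g 0 = 0.
Proof. by rewrite /lext msupp0 big_nil. Qed.

Lemma lextN g x : lext g (- x) = - lext g x.
Proof. by rewrite -scaleN1r lextZ scaleN1r. Qed.

Lemma lextB g x y : lext g (x - y) = lext g x - lext g y.
Proof. by rewrite lextD lextN. Qed.

Lemma lextX g m : lext g 'X_[m] = g m.
Proof. by rewrite /lext msuppX big_seq1 mcoeffX eqxx scale1r. Qed.

Lemma lext_sum g I (r : seq I) (P : pred I) (f : I -> V) :
  lext g (\sum_(i <- r | P i) f i) = \sum_(i <- r | P i) lext g (f i).
Proof.
elim: r => [|a r IH]; first by rewrite !big_nil lext0.
by rewrite !big_cons; case: (P a); rewrite ?lextD IH.
Qed.

Lemma lext_eq g g' p : {in msupp p, g =1 g'} -> lext g p = lext g' p.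
Proof. by move=> h; apply: eq_big_seq => m /h ->. Qed.

Lemma lin_ext_eq (f1 f2 : V -> V) :
  (forall x y, f1 (x + y) = f1 x + f1 y) -> (forall c x, f1 (c *: x) = c *: f1 x) ->
  (forall x y, f2 (x + y) = f2 x + f2 y) -> (forall c x, f2 (c *: x) = c *: f2 x) ->
  (forall m, f1 'X_[m] = f2 'X_[m]) -> forall x, f1 x = f2 x.
Proof.
move=> D1 Z1 D2 Z2 H x; rewrite [x]mpolyE.
have S (f : V -> V) : (forall x y, f (x + y) = f x + f y) -> (forall c x, f (c *: x) = c *: f x) ->
  forall (r : seq 'X_{1..n}) (h : 'X_{1..n} -> V), f (\sum_(m <- r) h m) = \sum_(m <- r) f (h m).
  move=> Df Zf r h; elim: r => [|a r IH]; last by rewrite !big_cons Df IH.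
  by rewrite !big_nil; have := Zf 0 0; rewrite !scale0r.
rewrite (S _ D1 Z1) (S _ D2 Z2); apply: eq_bigr => m _.
by rewrite Z1 Z2 H.
Qed.

Lemma msize_lext g p k :
  (forall m, m \in msupp p -> (msize (g m) <= (mdeg m) + k.+1)%N) ->
  (msize (lext g p) <= msize p + k)%N.
Proof.
move=> H; rewrite /lext; apply: leq_trans (msize_sum _ _ _) _.
apply/bigmax_leqP_seq => m mp _; apply: leq_trans (msizeZ_le _ _) _.
apply: leq_trans (H m mp) _; rewrite addnS -addSn leq_add2r.
exact: msize_mdeg_lt.
Qed.

End Lext.

End R1.
Import R1.

Module R2.
Import ssrcomplements mpoly.
Import ring.
Import GRing.Theory.
Local Open Scope ring_scope.

Definition i0 : 'I_6 := @Ordinal 6 0 isT.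
Definition i1 : 'I_6 := @Ordinal 6 1 isT.
Definition i2 : 'I_6 := @Ordinal 6 2 isT.
Definition i3 : 'I_6 := @Ordinal 6 3 isT.
Definition i4 : 'I_6 := @Ordinal 6 4 isT.
Definition i5 : 'I_6 := @Ordinal 6 5 isT.

Lemma mdegU (m : 'X_{1..6}) i : mdeg (m + U_(i))%MM = (mdeg m).+1.
Proof. by rewrite mdegD mdeg1 addn1. Qed.

Lemma mnm_decomp (m : 'X_{1..6}) i : m i != 0%N -> m = (m - U_(i) + U_(i))%MM.
Proof.
move=> h; rewrite submK //; apply/mnm_lepP => j; rewrite mnm1E.
by case: eqP => [<-|]; rewrite ?lt0n.
Qed.

Lemma mnmUE (m : 'X_{1..6}) i j : (m + U_(i))%MM j = (m j + (i == j))%N.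
Proof. by rewrite mnmDE mnm1E. Qed.

Section Rep.
Variable (F : fieldType) (p k2 k3 k5 k6 k8 k9 : F).
Local Notation V := {mpoly F[6]}.
Local Notation M := 'X_{1..6}.

Definition step (d : nat) (bc : (M -> V) * (M -> V)) : (M -> V) * (M -> V) :=
  let bp := bc.1 in let cp := bc.2 in
  let bn := fun m : M => if (mdeg m < d)%N then bp m
     else if m i0 == 0%N then 'X_[m + U_(i1)]
     else p *: ('X_i0 * bp (m - U_(i0))%MM) + k2 *: cp (m - U_(i0))%MM
          + k3 *: ('X_i5 * 'X_[m - U_(i0)]) in
  let cn := fun m : M => if (mdeg m < d)%N then cp m
     else if m i0 != 0%N then
       p^-1 *: ('X_i0 * cp (m - U_(i0))%MM) + k5 *: bp (m - U_(i0))%MM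
          + k6 *: ('X_i4 * 'X_[m - U_(i0)])
     else if m i1 != 0%N then
       p *: lext bn (cp (m - U_(i1))%MM) + k8 *: 'X_[m - U_(i1) + U_(i0)]
          + k9 *: ('X_i3 * 'X_[m - U_(i1)])
     else 'X_[m + U_(i2)] in
  (bn, cn).

Fixpoint lev (d : nat) : (M -> V) * (M -> V) :=
  if d is d'.+1 then step d' (lev d') else (fun _ => 0, fun _ => 0).

Lemma lev_S d : lev d.+1 = step d (lev d). Proof. by []. Qed.

Definition bm (m : M) := (lev (mdeg m).+1).1 m.
Definition cm (m : M) := (lev (mdeg m).+1).2 m.

Lemma lev_stable d (m : M) : (mdeg m <= d)%N -> (lev d.+1).1 m = bm m /\ (lev d.+1).2 m = cm m.
Proof.
elim: d => [|d IH]; first by rewrite leqn0 => /eqP h; rewrite /bm /cm h.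
rewrite leq_eqVlt; case/orP => [/eqP <-|lt]; first by [].
by rewrite /= lt; apply: IH.
Qed.

Lemma bm_0 (m : M) : m i0 = 0%N -> bm m = 'X_[m + U_(i1)].
Proof. by move=> h; rewrite /bm /= ltnn h eqxx. Qed.

Lemma bm_A (m : M) : bm (m + U_(i0))%MM =
  p *: ('X_i0 * bm m) + k2 *: cm m + k3 *: ('X_i5 * 'X_[m]).
Proof.
rewrite /bm /cm mdegU [in LHS]lev_S; cbv beta iota zeta delta [step fst snd].
by rewrite mdegU ltnn mnmUE eqxx addn1 addmK.
Qed.

Lemma cm_A (m : M) : cm (m + U_(i0))%MM =
  p^-1 *: ('X_i0 * cm m) + k5 *: bm m + k6 *: ('X_i4 * 'X_[m]).
Proof.
rewrite /bm /cm mdegU [in LHS]lev_S; cbv beta iota zeta delta [step fst snd].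
by rewrite mdegU ltnn mnmUE eqxx addn1 addmK.
Qed.

Lemma cm_C (m : M) : m i0 = 0%N -> m i1 = 0%N -> cm m = 'X_[m + U_(i2)].
Proof. by move=> h0 h1; rewrite /cm /= ltnn h0 h1 eqxx. Qed.

Lemma cm_B_gen (m : M) : m i0 = 0%N -> (msize (cm m) <= (mdeg m).+2)%N ->
  cm (m + U_(i1))%MM = p *: lext bm (cm m) + k8 *: 'X_[m + U_(i0)]
                        + k9 *: ('X_i3 * 'X_[m]).
Proof.
move=> h0 hs; rewrite {1}/cm mdegU lev_S; cbv beta iota zeta delta [step fst snd].
rewrite mdegU ltnn !mnmUE h0 /= addn1 /= addmK.
congr (_ *: _ + _ + _); apply: lext_eq => m' /msize_mdeg_lt hm'.
have hd : (mdeg m' <= (mdeg m).+1)%N by rewrite -ltnS; apply: leq_trans hm' hs.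
by case: (lev_stable hd) => <- _.
Qed.


Lemma msizeXM (i : 'I_6) (v : V) : (msize ('X_i * v) <= (msize v).+1)%N.
Proof.
have [->|nz] := eqVneq v 0; first by rewrite mulr0 msize0.
have nzX : ('X_i : V) != 0 by rewrite -msize_poly_eq0 msizeX.
by rewrite msizeM // msizeX mdeg1.
Qed.

Lemma msize3 (a b c : V) k : (msize a <= k)%N -> (msize b <= k)%N -> (msize c <= k)%N ->
  (msize (a + b + c) <= k)%N.
Proof.
move=> ha hb hc; apply: leq_trans (msizeD_le _ _) _; rewrite geq_max hc andbT.
by apply: leq_trans (msizeD_le _ _) _; rewrite geq_max ha hb.
Qed.

Lemma msizeZXM c (i : 'I_6) (v : V) k : (msize v <= k)%N -> (msize (c *: ('X_i * v)) <= k.+1)%N.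
Proof. by move=> h; apply: leq_trans (msizeZ_le _ _) _; apply: leq_trans (msizeXM _ _) _. Qed.

Lemma msizeZ' c (v : V) k : (msize v <= k)%N -> (msize (c *: v) <= k)%N.
Proof. by move=> h; apply: leq_trans (msizeZ_le _ _) _. Qed.

Lemma deg_bc (m : M) : (msize (bm m) <= (mdeg m).+2)%N /\ (msize (cm m) <= (mdeg m).+2)%N.
Proof.
suff H : forall d (m : M), (mdeg m <= d)%N ->
  (msize (bm m) <= (mdeg m).+2)%N /\ (msize (cm m) <= (mdeg m).+2)%N by exact: H.
clear m; elim=> [|d IH].
  move=> m0; rewrite leqn0 mdeg_eq0 => /eqP ->.
  have h0 : (0%MM : M) i0 = 0%N by rewrite mnm0E.
  have h1 : (0%MM : M) i1 = 0%N by rewrite mnm0E.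
  by rewrite bm_0 // cm_C // !msizeX !mdegU mdeg0.
have Hb : forall m : M, (mdeg m <= d.+1)%N -> (msize (bm m) <= (mdeg m).+2)%N.
  move=> m hm; have [h0|h0] := eqVneq (m i0) 0%N.
    by rewrite bm_0 // msizeX mdegU.
  rewrite (mnm_decomp h0) bm_A mdegU; set m' := (m - U_(i0))%MM.
  have hm' : (mdeg m' <= d)%N by move: hm; rewrite (mnm_decomp h0) mdegU.
  case: (IH m' hm') => h1 h2; apply: msize3.
  - exact: msizeZXM.
  - by apply: msizeZ'; apply: leq_trans h2 _.
  - by apply: msizeZXM; rewrite msizeX.
move=> m hm; split; first exact: Hb.
have [h0|h0] := eqVneq (m i0) 0%N; last first.
  rewrite (mnm_decomp h0) cm_A mdegU; set m' := (m - U_(i0))%MM.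
  have hm' : (mdeg m' <= d)%N by move: hm; rewrite (mnm_decomp h0) mdegU.
  case: (IH m' hm') => h1 h2; apply: msize3.
  - exact: msizeZXM.
  - by apply: msizeZ'; apply: leq_trans h1 _.
  - by apply: msizeZXM; rewrite msizeX.
have [h1|h1] := eqVneq (m i1) 0%N; first by rewrite cm_C // msizeX mdegU.
set m' := (m - U_(i1))%MM.
have em : m = (m' + U_(i1))%MM by apply: mnm_decomp.
have hm' : (mdeg m' <= d)%N by move: hm; rewrite em mdegU.
have h0' : m' i0 = 0%N by rewrite mnmBE h0.
case: (IH m' hm') => _ h2; rewrite em cm_B_gen // mdegU; apply: msize3.
- apply: msizeZ'; apply: leq_trans (msize_lext (k := 1) _) _.
    move=> m'' /msize_mdeg_lt hm''; rewrite addn2; apply: Hb.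
    by rewrite -ltnS (leq_trans hm'') // (leq_trans h2) // ltnS em mdegU.
  by rewrite addn1 ltnS.
- by rewrite msizeZ' // msizeX mdegU.
- by apply: msizeZXM; rewrite msizeX.
Qed.

Lemma cm_B (m : M) : m i0 = 0%N ->
  cm (m + U_(i1))%MM = p *: lext bm (cm m) + k8 *: 'X_[m + U_(i0)]
                        + k9 *: ('X_i3 * 'X_[m]).
Proof. by move=> h; apply: cm_B_gen => //; case: (deg_bc m). Qed.

Lemma lext_Xk g (k : 'I_6) (v : V) :
  {in msupp v, forall m, g (m + U_(k))%MM = 'X_k * g m} ->
  lext g ('X_k * v) = 'X_k * lext g v.
Proof.
move=> H; have -> : lext g v = \sum_(m <- msupp v) v@_m *: g m by [].
rewrite {1}[v]mpolyE mulr_sumr lext_sum mulr_sumr.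
apply: eq_big_seq => m hm; rewrite -scalerAr lextZ -mpolyXD addmC lextX H //.
by rewrite scalerAr.
Qed.

Lemma XXC (m : M) (k : 'I_6) j : 'X_[m + U_(k) + U_(j)] = 'X_k * 'X_[m + U_(j)] :> V.
Proof. by rewrite -addmA [(U_(k) + _)%MM]addmC addmA mpolyXD mulrC. Qed.

Lemma central_bc (k : 'I_6) : (3 <= k)%N -> forall m : M,
  bm (m + U_(k))%MM = 'X_k * bm m /\ cm (m + U_(k))%MM = 'X_k * cm m.
Proof.
move=> hk.
have k0 : (k == i0) = false by apply/eqP => e; move: hk; rewrite e.
have k1 : (k == i1) = false by apply/eqP => e; move: hk; rewrite e.
suff H : forall d (m : M), (mdeg m <= d)%N ->
  bm (m + U_(k))%MM = 'X_k * bm m /\ cm (m + U_(k))%MM = 'X_k * cm m by move=> m; exact: H.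
have Hx : forall (m : M) (j : 'I_6), 'X_[m + U_(k) + U_(j)] = 'X_k * 'X_[m + U_(j)] :> V.
  by move=> m j; apply: XXC.
elim=> [|d IH].
  move=> m; rewrite leqn0 mdeg_eq0 => /eqP ->.
  have h0 : (0%MM : M) i0 = 0%N by rewrite mnm0E.
  have h1 : (0%MM : M) i1 = 0%N by rewrite mnm0E.
  have h0' : (0%MM + U_(k) : M)%MM i0 = 0%N by rewrite mnmUE h0 k0.
  have h1' : (0%MM + U_(k) : M)%MM i1 = 0%N by rewrite mnmUE h1 k1.
  by rewrite bm_0 // cm_C // bm_0 // cm_C // !Hx.
have Hb : forall m : M, (mdeg m <= d.+1)%N -> bm (m + U_(k))%MM = 'X_k * bm m.
  move=> m hm; have [h0|h0] := eqVneq (m i0) 0%N.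
    by rewrite !bm_0 ?mnmUE ?h0 ?k0 // Hx.
  rewrite (mnm_decomp h0); set m' := (m - U_(i0))%MM.
  have hm' : (mdeg m' <= d)%N by move: hm; rewrite (mnm_decomp h0) mdegU.
  case: (IH m' hm') => e1 e2.
  rewrite -addmA [(U_(i0) + _)%MM]addmC addmA !bm_A e1 e2 mpolyXD.
  rewrite -!mul_mpolyC; ring.
move=> m hm; split; first exact: Hb.
have [h0|h0] := eqVneq (m i0) 0%N; last first.
  rewrite (mnm_decomp h0); set m' := (m - U_(i0))%MM.
  have hm' : (mdeg m' <= d)%N by move: hm; rewrite (mnm_decomp h0) mdegU.
  case: (IH m' hm') => e1 e2.
  rewrite -addmA [(U_(i0) + _)%MM]addmC addmA !cm_A e1 e2 mpolyXD.
  rewrite -!mul_mpolyC; ring.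
have [h1|h1] := eqVneq (m i1) 0%N.
  by rewrite !cm_C ?mnmUE ?h0 ?h1 ?k0 ?k1 // Hx.
set m' := (m - U_(i1))%MM.
have em : m = (m' + U_(i1))%MM by apply: mnm_decomp.
have hm' : (mdeg m' <= d)%N by move: hm; rewrite em mdegU.
have h0' : m' i0 = 0%N by rewrite mnmBE h0.
have h0'' : (m' + U_(k))%MM i0 = 0%N by rewrite mnmUE h0' k0.
case: (IH m' hm') => _ e2.
rewrite em -addmA [(U_(i1) + _)%MM]addmC addmA !cm_B // e2 Hx mpolyXD.
rewrite lext_Xk; last first.
  move=> m'' /msize_mdeg_lt hm''; apply: Hb.
  case: (deg_bc m') => _ h2.
  by rewrite -ltnS (leq_trans hm'') // (leq_trans h2) // ltnS em mdegU.
rewrite !mpolyXD -!mul_mpolyC; ring.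
Qed.

Definition opA (v : V) : V := 'X_i0 * v.
Definition opB (v : V) : V := lext bm v.
Definition opC (v : V) : V := lext cm v.
Definition opX (k : 'I_6) (v : V) : V := 'X_k * v.

Lemma opA_X (m : M) : opA 'X_[m] = 'X_[m + U_(i0)].
Proof. by rewrite /opA mpolyXD mulrC. Qed.
Lemma opX_X k (m : M) : opX k 'X_[m] = 'X_[m + U_(k)].
Proof. by rewrite /opX mpolyXD mulrC. Qed.
Lemma opB_X (m : M) : opB 'X_[m] = bm m. Proof. exact: lextX. Qed.
Lemma opC_X (m : M) : opC 'X_[m] = cm m. Proof. exact: lextX. Qed.

Lemma opBD x y : opB (x + y) = opB x + opB y. Proof. exact: lextD. Qed.
Lemma opCD x y : opC (x + y) = opC x + opC y. Proof. exact: lextD. Qed.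
Lemma opBZ c x : opB (c *: x) = c *: opB x. Proof. exact: lextZ. Qed.
Lemma opCZ c x : opC (c *: x) = c *: opC x. Proof. exact: lextZ. Qed.
Lemma opAD x y : opA (x + y) = opA x + opA y. Proof. exact: mulrDr. Qed.
Lemma opAZ c x : opA (c *: x) = c *: opA x. Proof. by rewrite /opA scalerAr. Qed.
Lemma opXD k x y : opX k (x + y) = opX k x + opX k y. Proof. exact: mulrDr. Qed.
Lemma opXZ k c x : opX k (c *: x) = c *: opX k x. Proof. by rewrite /opX scalerAr. Qed.

Lemma opB_Xk (k : 'I_6) x : (3 <= k)%N -> opB (opX k x) = opX k (opB x).
Proof. by move=> hk; apply: lext_Xk => m _; case: (central_bc hk m). Qed.
Lemma opC_Xk (k : 'I_6) x : (3 <= k)%N -> opC (opX k x) = opX k (opC x).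
Proof. by move=> hk; apply: lext_Xk => m _; case: (central_bc hk m). Qed.

Ltac linsimp := rewrite ?(opBD, opCD, opAD, opXD, opBZ, opCZ, opAZ, opXZ).
Ltac lincl := rewrite /opA /opX -!mul_mpolyC; ring.

Lemma RBA x : opB (opA x) = p *: opA (opB x) + k2 *: opC x + k3 *: opX i5 x.
Proof.
apply: (lin_ext_eq (f1 := fun x => opB (opA x))
         (f2 := fun x => p *: opA (opB x) + k2 *: opC x + k3 *: opX i5 x)).
- by move=> ? ?; linsimp.
- by move=> ? ?; linsimp.
- by move=> ? ?; linsimp; lincl.
- by move=> ? ?; linsimp; lincl.
by move=> m; rewrite opA_X opB_X bm_A opB_X opC_X.
Qed.

Lemma RCA x : opC (opA x) = p^-1 *: opA (opC x) + k5 *: opB x + k6 *: opX i4 x.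
Proof.
apply: (lin_ext_eq (f1 := fun x => opC (opA x))
         (f2 := fun x => p^-1 *: opA (opC x) + k5 *: opB x + k6 *: opX i4 x)).
- by move=> ? ?; linsimp.
- by move=> ? ?; linsimp.
- by move=> ? ?; linsimp; lincl.
- by move=> ? ?; linsimp; lincl.
by move=> m; rewrite opA_X opC_X cm_A opB_X opC_X.
Qed.

Hypothesis p0 : p != 0.

Lemma RCB x : opC (opB x) = p *: opB (opC x) + k8 *: opA x + k9 *: opX i3 x.
Proof.
apply: (lin_ext_eq (f1 := fun x => opC (opB x))
         (f2 := fun x => p *: opB (opC x) + k8 *: opA x + k9 *: opX i3 x)).
- by move=> ? ?; linsimp.
- by move=> ? ?; linsimp.
- by move=> ? ?; linsimp; lincl.
- by move=> ? ?; linsimp; lincl.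
move=> m; move: {2}(m i0) (erefl (m i0)) => n; elim: n m => [|n IH] m hm.
  by rewrite opB_X bm_0 // opC_X cm_B // opA_X /opX opC_X.
have h0 : m i0 != 0%N by rewrite hm.
rewrite (mnm_decomp h0); set m' := (m - U_(i0))%MM.
have hm' : m' i0 = n by rewrite mnmBE hm mnm1E eqxx subn1.
rewrite -!opA_X; set w := 'X_[m'].
have IHw := IH m' hm'; rewrite -/w in IHw.
rewrite RBA RCA; linsimp; rewrite RCA IHw opC_Xk // RBA opB_Xk //.
have h : (p%:MP * (p^-1)%:MP = 1 :> V) by rewrite -mpolyCM mulfV ?mpolyC1.
linsimp; rewrite /opA /opX -!mul_mpolyC; ring: h.
Qed.

Lemma msize_opB x : (msize (opB x) <= (msize x).+1)%N.
Proof.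
apply: leq_trans (msize_lext (k := 1) _) _; last by rewrite addn1.
by move=> m _; rewrite addn2; case: (deg_bc m).
Qed.
Lemma msize_opC x : (msize (opC x) <= (msize x).+1)%N.
Proof.
apply: leq_trans (msize_lext (k := 1) _) _; last by rewrite addn1.
by move=> m _; rewrite addn2; case: (deg_bc m).
Qed.
Lemma msize_opA x : (msize (opA x) <= (msize x).+1)%N. Proof. exact: msizeXM. Qed.
Lemma msize_opX k x : (msize (opX k x) <= (msize x).+1)%N. Proof. exact: msizeXM. Qed.

End Rep.

End R2.
Import R2.

Module R3.
Import boolp.
Import ssrcomplements mpoly.
Import GRing.Theory.
Local Open Scope ring_scope.

Section Endo.
Variable F : fieldType.
Local Notation V := {mpoly F[6]}.

Record endo := Endo {
  ef :> V -> V;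
  ef_add : forall x y, ef (x + y) = ef x + ef y;
  ef_scale : forall c x, ef (c *: x) = c *: ef x;
  ef_cent : forall k : 'I_6, (3 <= k)%N -> forall x, ef ('X_k * x) = 'X_k * ef x }.

HB.instance Definition _ := gen_eqMixin endo.
HB.instance Definition _ := gen_choiceMixin endo.

Lemma endo_ext (f g : endo) : (forall v, f v = g v) -> f = g.
Proof.
case: f => f fa fs fc; case: g => g ga gs gc /= H.
have e : f = g by apply: funext.
subst g; congr Endo; apply: Prop_irrelevance.
Qed.

Lemma ef0 (f : endo) : f 0 = 0.
Proof. by have := ef_scale f 0 0; rewrite !scale0r. Qed.

Program Definition e0 : endo := @Endo (fun _ => 0) _ _ _.
Next Obligation. by rewrite addr0. Qed.
Next Obligation. by rewrite scaler0. Qed.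
Next Obligation. by rewrite mulr0. Qed.

Program Definition eadd (f g : endo) : endo := @Endo (fun x => f x + g x) _ _ _.
Next Obligation. by rewrite !ef_add addrACA. Qed.
Next Obligation. by rewrite !ef_scale scalerDr. Qed.
Next Obligation. by rewrite !ef_cent // mulrDr. Qed.

Program Definition eopp (f : endo) : endo := @Endo (fun x => - f x) _ _ _.
Next Obligation. by rewrite ef_add opprD. Qed.
Next Obligation. by rewrite ef_scale scalerN. Qed.
Next Obligation. by rewrite ef_cent // mulrN. Qed.

Program Definition emul (f g : endo) : endo := @Endo (fun x => f (g x)) _ _ _.
Next Obligation. by rewrite !ef_add. Qed.
Next Obligation. by rewrite !ef_scale. Qed.
Next Obligation. by rewrite !ef_cent. Qed.

Program Definition e1 : endo := @Endo (fun x => x) _ _ _.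

Program Definition escale (c : F) (f : endo) : endo := @Endo (fun x => c *: f x) _ _ _.
Next Obligation. by rewrite ef_add scalerDr. Qed.
Next Obligation. by rewrite ef_scale !scalerA mulrC. Qed.
Next Obligation. by rewrite ef_cent // scalerAr. Qed.

Lemma eaddA : associative eadd. Proof. by move=> *; apply: endo_ext => v /=; rewrite addrA. Qed.
Lemma eaddC : commutative eadd. Proof. by move=> *; apply: endo_ext => v /=; rewrite addrC. Qed.
Lemma eadd0 : left_id e0 eadd. Proof. by move=> *; apply: endo_ext => v /=; rewrite add0r. Qed.
Lemma eaddN : left_inverse e0 eopp eadd. Proof. by move=> *; apply: endo_ext => v /=; rewrite addNr. Qed.

HB.instance Definition _ := GRing.isZmodule.Build endo eaddA eaddC eadd0 eaddN.

Lemma emulA : associative emul. Proof. by move=> *; apply: endo_ext. Qed.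
Lemma emul1 : left_id e1 emul. Proof. by move=> *; apply: endo_ext. Qed.
Lemma emulr1 : right_id e1 emul. Proof. by move=> *; apply: endo_ext. Qed.
Lemma emulDl : left_distributive emul +%R. Proof. by move=> *; apply: endo_ext. Qed.
Lemma emulDr : right_distributive emul +%R.
Proof. by move=> f g h; apply: endo_ext => v /=; rewrite ef_add. Qed.
Lemma e1_neq0 : e1 != 0.
Proof.
apply/eqP => /(congr1 (fun f : endo => f 1)) /= /eqP; rewrite oner_eq0.
by [].
Qed.

HB.instance Definition _ := GRing.Zmodule_isNzRing.Build endo emulA emul1 emulr1 emulDl emulDr e1_neq0.

Lemma escaleA a b (f : endo) : escale a (escale b f) = escale (a * b) f.
Proof. by apply: endo_ext => v /=; rewrite scalerA. Qed.
Lemma escale1 : left_id 1 escale. Proof. by move=> f; apply: endo_ext => v /=; rewrite scale1r. Qed.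
Lemma escaleDr : right_distributive escale +%R.
Proof. by move=> a f g; apply: endo_ext => v /=; rewrite scalerDr. Qed.
Lemma escaleDl (f : endo) : {morph escale^~ f : a b / a + b}.
Proof. by move=> a b; apply: endo_ext => v /=; rewrite scalerDl. Qed.

HB.instance Definition _ := GRing.Zmodule_isLmodule.Build F endo escaleA escale1 escaleDr escaleDl.

Lemma escaleAl (a : F) (u v : endo) : a *: (u * v) = (a *: u) * v.
Proof. by apply: endo_ext. Qed.
HB.instance Definition _ := GRing.Lmodule_isLalgebra.Build F endo escaleAl.
Lemma escaleAr (a : F) (u v : endo) : a *: (u * v) = u * (a *: v).
Proof. by apply: endo_ext => x /=; rewrite ef_scale. Qed.
HB.instance Definition _ := GRing.Lalgebra_isAlgebra.Build F endo escaleAr.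

Lemma endo_mulE (f g : endo) x : (f * g) x = f (g x). Proof. by []. Qed.
Lemma endo_addE (f g : endo) x : (f + g) x = f x + g x. Proof. by []. Qed.
Lemma endo_oppE (f : endo) x : (- f) x = - f x. Proof. by []. Qed.
Lemma endo_scaleE c (f : endo) x : (c *: f) x = c *: f x. Proof. by []. Qed.
Lemma endo_oneE x : (1 : endo) x = x. Proof. by []. Qed.
Lemma endo_zeroE x : (0 : endo) x = 0. Proof. by []. Qed.

End Endo.

End R3.
Import R3.

Module D1.
Import ring.
Import GRing.Theory.
Local Open Scope ring_scope.

Section Rels.
Variables (F : fieldType) (q : F) (D : algType F) (A B C : D).
Hypothesis hq : q != 0.
Hypothesis hq4 : q ^+ 4 != 1.
Hypothesis hrel : AW_rels q A B C.

Local Notation t := (q ^+ 2 - q ^- 2).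
Local Notation qq := (q + q^-1).
Local Notation al := (aw_alpha q A B C).
Local Notation be := (aw_beta q A B C).
Local Notation ga := (aw_gamma q A B C).

Lemma ht : t != 0.
Proof.
apply: contra hq4; rewrite subr_eq0 => /eqP e; apply/eqP.
by rewrite (_ : 4 = 2 + 2)%N // exprD {1}e mulVf // expf_neq0.
Qed.

Lemma hqq : qq != 0.
Proof.
apply: contra hq4 => /eqP e.
have e2 : q ^+ 2 = -1.
  have : q * (q + q^-1) = 0 by rewrite e mulr0.
  by rewrite mulrDr mulfV // => /eqP; rewrite addr_eq0 => /eqP.
by rewrite (_ : 4 = 2 * 2)%N // exprM e2 sqrrN expr1n.
Qed.

Lemma hq4' : (q * q) ^+ 2 - 1 != 0.
Proof. by rewrite -expr2 -exprM subr_eq0. Qed.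

Lemma hq2' : q * q + 1 != 0.
Proof.
apply: contra hq4 => /eqP e; apply/eqP.
have e2 : q ^+ 2 = -1 by rewrite expr2; apply/eqP; rewrite -addr_eq0 e.
by rewrite (_ : 4 = 2 * 2)%N // exprM e2 sqrrN expr1n.
Qed.

Lemma central_scale (x : D) c : central x -> central (c *: x).
Proof. by move=> h y; rewrite -scalerAl h scalerAr. Qed.

Lemma cal : central al. Proof. by case: hrel => *; apply: central_scale. Qed.
Lemma cbe : central be. Proof. by case: hrel => *; apply: central_scale. Qed.
Lemma cga : central ga. Proof. by case: hrel => *; apply: central_scale. Qed.

Ltac fin := repeat split; field; rewrite ?hq4' ?hq2' ?ht ?hqq ?hq //; match goal with |- ?g => idtac "LEFT" g end.

Lemma nBA : B * A = q ^+ 2 *: (A * B) + (q * t) *: C - (q * t / qq) *: ga.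
Proof.
rewrite /aw_gamma /aw_cC.
lin F; fin.
Qed.

Lemma nCA : C * A = q ^- 2 *: (A * C) - (q^-1 * t) *: B + (q^-1 * t / qq) *: be.
Proof.
rewrite /aw_beta /aw_cB.
lin F; fin.
Qed.

Lemma nCB : C * B = q ^+ 2 *: (B * C) + (q * t) *: A - (q * t / qq) *: al.
Proof.
rewrite /aw_alpha /aw_cA.
lin F; fin.
Qed.

End Rels.

Section Comp.
Variables (F : fieldType) (q : F) (D : algType F) (A B C al be ga : D).
Hypothesis hq : q != 0.
Hypothesis hq4 : q ^+ 4 != 1.
Hypothesis cal : central al.
Hypothesis cbe : central be.
Hypothesis cga : central ga.
Local Notation t := (q ^+ 2 - q ^- 2).
Local Notation qq := (q + q^-1).
Hypothesis nBA : B * A = q ^+ 2 *: (A * B) + (q * t) *: C - (q * t / qq) *: ga.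
Hypothesis nCA : C * A = q ^- 2 *: (A * C) - (q^-1 * t) *: B + (q^-1 * t / qq) *: be.
Hypothesis nCB : C * B = q ^+ 2 *: (B * C) + (q * t) *: A - (q * t / qq) *: al.

Definition Om (A B C al be ga : D) :=
  q *: (A * B * C) + q ^+ 2 *: (A * A) + q ^- 2 *: (B * B) + q ^+ 2 *: (C * C)
  - q *: (A * al) - q^-1 *: (B * be) - q *: (C * ga).

Let ht' : t != 0. Proof. by apply: ht. Qed.
Let hqq' : qq != 0. Proof. by apply: hqq. Qed.
Let hq4'' : (q * q) ^+ 2 - 1 != 0. Proof. by apply: hq4'. Qed.
Let hq2'' : q * q + 1 != 0. Proof. by apply: hq2'. Qed.
Ltac fin := repeat split; field; rewrite ?hq4'' ?hq2'' ?ht' ?hqq' ?hq //; match goal with |- ?g => idtac "LEFT" g end.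

Ltac ncs := rewrite ?mulrDr ?mulrDl ?mulrBr ?mulrBl ?mulrN ?mulNr -?scalerAr -?scalerAl ?mulrA.

Lemma nBCA : B * C * A = A * B * C + (q^-1 * t) *: (C * C) - (q^-2 * (q * t / qq)) *: (C * ga)
   - (q^-1 * t) *: (B * B) + (q^-1 * t / qq) *: (B * be).
Proof.
rewrite -mulrA nCA; ncs; rewrite nBA; ncs; rewrite (cga C).
lin F; fin.
Qed.

Lemma nBBA : B * B * A = q ^+ 4 *: (A * B * B) + (q ^+ 5 * t + q * t) *: (B * C)
   + (q ^+ 4 * t ^+ 2) *: A - (q ^+ 3 * t * (q * t / qq)) *: al
   - ((q ^+ 2 + 1) * (q * t / qq)) *: (B * ga).
Proof.
rewrite -mulrA nBA; ncs; rewrite nBA; ncs; rewrite nCB; ncs; rewrite (cga B).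
lin F; fin.
Qed.

Lemma nCCA : C * C * A = q ^- 4 *: (A * C * C) - (q ^- 3 * t + q * t) *: (B * C)
   + ((q ^- 2 + 1) * (q^-1 * t / qq)) *: (C * be) - (t ^+ 2) *: A
   + (q^-1 * t * (q * t / qq)) *: al.
Proof.
rewrite -mulrA nCA; ncs; rewrite nCA; ncs; rewrite nCB; ncs; rewrite (cbe C).
lin F; fin.
Qed.

Lemma Omega_commA : A * Om A B C al be ga = Om A B C al be ga * A.
Proof.
rewrite /Om; ncs.
have e1 : A * B * C * A = A * (B * C * A) by rewrite !mulrA.
have e2 : A * al * A = A * A * al by rewrite -mulrA (cal A) mulrA.
have e3 : B * be * A = B * A * be by rewrite -mulrA (cbe A) mulrA.
have e4 : C * ga * A = C * A * ga by rewrite -mulrA (cga A) mulrA.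
rewrite e1 e2 e3 e4 nBCA nBBA nCCA nBA nCA; ncs; rewrite (cga be).
lin F; fin.
Qed.

Lemma Omega_cyc : Om A B C al be ga = Om B C A be ga al.
Proof.
rewrite /Om nBCA.
lin F; fin.
Qed.

End Comp.

End D1.
Import D1.

Module D2.
Import ring.
Import ssrcomplements mpoly.
Import GRing.Theory.
Local Open Scope ring_scope.

Definition j0 : 'I_6 := @Ordinal 6 0 isT.
Definition j1 : 'I_6 := @Ordinal 6 1 isT.
Definition j2 : 'I_6 := @Ordinal 6 2 isT.
Definition j3 : 'I_6 := @Ordinal 6 3 isT.
Definition j4 : 'I_6 := @Ordinal 6 4 isT.
Definition j5 : 'I_6 := @Ordinal 6 5 isT.


Definition leo (x y : 'I_6) := (val x <= val y)%N.
Fixpoint ins (x : 'I_6) (s : seq 'I_6) : seq 'I_6 :=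
  if s is y :: s' then (if leo x y then x :: s else y :: ins x s') else [:: x].
Fixpoint isort (w : seq 'I_6) : seq 'I_6 := if w is x :: w' then ins x (isort w') else [::].
Definition cnt (w : seq 'I_6) : 'X_{1..6} := [multinom count_mem i w | i < 6].
Definition mw (m : 'X_{1..6}) : seq 'I_6 :=
  isort (nseq (m j0) j0 ++ nseq (m j1) j1 ++ nseq (m j2) j2 ++ nseq (m j3) j3
         ++ nseq (m j4) j4 ++ nseq (m j5) j5).

Lemma count_ins x s i : count_mem i (ins x s) = ((x == i) + count_mem i s)%N.
Proof.
elim: s => [|y s IH] /=; first by rewrite addn0.
by case: ifP => _ //=; rewrite IH addnCA.
Qed.

Lemma count_isort w i : count_mem i (isort w) = count_mem i w.
Proof. by elim: w => [//|x w IH] /=; rewrite count_ins IH. Qed.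

Lemma size_ins x s : size (ins x s) = (size s).+1.
Proof. by elim: s => [//|y s IH] /=; case: ifP => //= _; rewrite IH. Qed.

Lemma size_isort w : size (isort w) = size w.
Proof. by elim: w => [//|x w IH] /=; rewrite size_ins IH. Qed.

Lemma leo_trans : transitive leo.
Proof. by move=> y x z; rewrite /leo; apply: leq_trans. Qed.
Lemma leo_total x y : leo x y || leo y x.
Proof. exact: leq_total. Qed.
Lemma leo_anti : antisymmetric leo.
Proof. by move=> x y; rewrite /leo -eqn_leq => /eqP h; apply: val_inj. Qed.

Lemma path_ins z x s : leo z x -> path leo z s -> path leo z (ins x s).
Proof.
elim: s z => [|y s IH] z hzx /=; first by rewrite hzx.
case/andP => hzy hys; case: ifP => hxy /=.
  by rewrite hzx hxy hys.
rewrite hzy /=; apply: IH => //.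
by case/orP: (leo_total x y) => h; [rewrite h in hxy | ].
Qed.

Lemma sorted_ins x s : sorted leo s -> sorted leo (ins x s).
Proof.
case: s => [//|y s] /= hs; case: ifP => hxy /=; first by rewrite hxy hs.
apply: path_ins => //.
by case/orP: (leo_total x y) => h; [rewrite h in hxy | ].
Qed.

Lemma sorted_isort w : sorted leo (isort w).
Proof. by elim: w => [//|x w IH] /=; apply: sorted_ins. Qed.

Lemma sorted_cnt_eq s1 s2 : sorted leo s1 -> sorted leo s2 ->
  (forall i, count_mem i s1 = count_mem i s2) -> s1 = s2.
Proof.
move=> h1 h2 hc; apply: (sorted_eq leo_trans leo_anti) => //.
by apply/allP => i _; apply/eqP; apply: hc.
Qed.

Lemma count_mw m i : count_mem i (mw m) = m i.
Proof.
rewrite count_isort !count_cat !count_nseq.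
by case: i => [[|[|[|[|[|[|//]]]]]] hi] /=; rewrite ?mul0n ?mul1n ?addn0 ?add0n;
  congr (m _); apply: val_inj.
Qed.

Lemma cnt_mw m : cnt (mw m) = m.
Proof. by apply/mnmP => i; rewrite mnmE count_mw. Qed.

Lemma sorted_mw m : sorted leo (mw m).
Proof. exact: sorted_isort. Qed.

Lemma isort_mw w : isort w = mw (cnt w).
Proof.
apply: sorted_cnt_eq; rewrite ?sorted_isort ?sorted_mw // => i.
by rewrite count_isort count_mw mnmE.
Qed.

Lemma ins_mw x m : ins x (mw m) = mw (m + U_(x))%MM.
Proof.
apply: sorted_cnt_eq; rewrite ?sorted_ins ?sorted_mw // => i.
by rewrite count_ins !count_mw mnmDE mnm1E addnC.
Qed.

Lemma size_count (s : seq 'I_6) : size s = (\sum_(i < 6) count_mem i s)%N.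
Proof.
elim: s => [|x s IH] /=; first by rewrite big1.
rewrite IH big_split /= -add1n; congr (_ + _)%N.
by rewrite (bigD1 x) //= eqxx big1 // => i /negbTE; rewrite eq_sym => ->.
Qed.

Lemma size_mw m : size (mw m) = mdeg m.
Proof. by rewrite size_count mdegE; apply: eq_bigr => i _; rewrite count_mw. Qed.

Lemma prod_count (R : comNzRingType) (f : 'I_6 -> R) (s : seq 'I_6) :
  \prod_(y <- s) f y = \prod_(i < 6) f i ^+ count_mem i s.
Proof.
elim: s => [|x s IH]; first by rewrite big_nil big1.
rewrite big_cons IH /=.
rewrite [RHS](eq_bigr (fun i => f i ^+ (x == i) * f i ^+ count_mem i s)); last first.
  by move=> i _; rewrite -exprD.
rewrite big_split /=; congr (_ * _).
rewrite (bigD1 x) //= eqxx expr1 big1 ?mulr1 // => i /negbTE.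
by rewrite eq_sym => ->; rewrite expr0.
Qed.


Section Words.
Variables (F : fieldType) (D : algType F) (A B C al be ga : D).

Definition gen (i : 'I_6) : D := nth 0 [:: A; B; C; al; be; ga] i.
Definition wordval (w : seq 'I_6) : D := \prod_(i <- w) gen i.

Lemma wordval_nil : wordval [::] = 1. Proof. by rewrite /wordval big_nil. Qed.
Lemma wordval_cons x w : wordval (x :: w) = gen x * wordval w.
Proof. by rewrite /wordval big_cons. Qed.
Lemma wordval_cat w1 w2 : wordval (w1 ++ w2) = wordval w1 * wordval w2.
Proof. by rewrite /wordval big_cat. Qed.
Lemma wordval1 x : wordval [:: x] = gen x.
Proof. by rewrite wordval_cons wordval_nil mulr1. Qed.

Inductive inS (d : nat) : D -> Prop :=
  | inS_w w : (size w <= d)%N -> inS d (wordval w)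
  | inS_add x y : inS d x -> inS d y -> inS d (x + y)
  | inS_scale (c : F) x : inS d x -> inS d (c *: x).

Lemma inS0 d : inS d 0.
Proof. by rewrite -(scale0r (wordval [::])); apply/inS_scale/inS_w. Qed.
Lemma inSN d x : inS d x -> inS d (- x).
Proof. by move=> h; rewrite -scaleN1r; apply: inS_scale. Qed.
Lemma inSB d x y : inS d x -> inS d y -> inS d (x - y).
Proof. by move=> hx hy; apply: inS_add => //; apply: inSN. Qed.
Lemma inS_le d d' x : (d <= d')%N -> inS d x -> inS d' x.
Proof.
move=> le; elim=> [w hw|x1 y1 _ h1 _ h2|c x1 _ h1]; last 2 first.
- exact: inS_add. - exact: inS_scale.
by apply: inS_w; apply: leq_trans le.
Qed.
Lemma inS_one d : inS d 1.
Proof. by rewrite -wordval_nil; apply: inS_w. Qed.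
Lemma inS_gen x : inS 1 (gen x).
Proof. by rewrite -wordval1; apply: inS_w. Qed.

Lemma inS_mul a b x y : inS a x -> inS b y -> inS (a + b) (x * y).
Proof.
move=> hx; elim: hx y => [w hw|x1 y1 _ h1 _ h2|c x1 _ h1] y hy.
- elim: hy => [w' hw'|x2 y2 _ h3 _ h4|c x2 _ h3].
  + rewrite -wordval_cat; apply: inS_w; rewrite size_cat; exact: leq_add.
  + by rewrite mulrDr; apply: inS_add.
  + by rewrite -scalerAr; apply: inS_scale.
- by rewrite mulrDl; apply: inS_add; [apply: h1 | apply: h2].
- by rewrite -scalerAl; apply: inS_scale; apply: h1.
Qed.

Lemma inS_mul1l n x y : inS 1 x -> inS n y -> inS n.+1 (x * y).
Proof. exact: (inS_mul (a := 1)). Qed.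
Lemma inS_mul1r n x y : inS n x -> inS 1 y -> inS n.+1 (x * y).
Proof. by move=> hx hy; rewrite -addn1; apply: inS_mul. Qed.

Lemma inS_sum d I (r : seq I) (P : pred I) (f : I -> D) :
  (forall i, P i -> inS d (f i)) -> inS d (\sum_(i <- r | P i) f i).
Proof.
move=> H; elim: r => [|a r IH]; first by rewrite big_nil; apply: inS0.
by rewrite big_cons; case: ifP => // Pa; apply: inS_add => //; apply: H.
Qed.

Lemma inS_word_bound w : inS (size w) (wordval w).
Proof. exact: inS_w. Qed.

End Words.

Definition cc (F : fieldType) (q : F) (x y : 'I_6) : F :=
  if (val x == 1%N) && (val y == 0%N) then q ^+ 2
  else if (val x == 0%N) && (val y == 1%N) then q ^- 2
  else if (val x == 2%N) && (val y == 0%N) then q ^- 2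
  else if (val x == 0%N) && (val y == 2%N) then q ^+ 2
  else if (val x == 2%N) && (val y == 1%N) then q ^+ 2
  else if (val x == 1%N) && (val y == 2%N) then q ^- 2
  else 1.

Section Straight.
Variables (F : fieldType) (q : F) (D : algType F) (A B C al be ga : D).
Hypothesis hq : q != 0.
Hypothesis hq4 : q ^+ 4 != 1.
Hypothesis cal : central al.
Hypothesis cbe : central be.
Hypothesis cga : central ga.
Local Notation t := (q ^+ 2 - q ^- 2).
Local Notation qq := (q + q^-1).
Hypothesis nBA : B * A = q ^+ 2 *: (A * B) + (q * t) *: C - (q * t / qq) *: ga.
Hypothesis nCA : C * A = q ^- 2 *: (A * C) - (q^-1 * t) *: B + (q^-1 * t / qq) *: be.
Hypothesis nCB : C * B = q ^+ 2 *: (B * C) + (q * t) *: A - (q * t / qq) *: al.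

Local Notation gen := (gen A B C al be ga).
Local Notation wordval := (wordval A B C al be ga).
Local Notation inS := (inS A B C al be ga).
Local Notation cc := (cc q).

Let ht' : t != 0. Proof. by apply: ht. Qed.
Let hqq' : qq != 0. Proof. by apply: hqq. Qed.
Let hq4'' : (q * q) ^+ 2 - 1 != 0. Proof. by apply: hq4'. Qed.
Let hq2'' : q * q + 1 != 0. Proof. by apply: hq2'. Qed.
Ltac fin := repeat split; field; rewrite ?hq4'' ?hq2'' ?ht' ?hqq' ?hq //; match goal with |- ?g => idtac "LEFT" g end.

Lemma inSA : inS 1 A. Proof. exact: (inS_gen _ _ _ _ _ _ j0). Qed.
Lemma inSB' : inS 1 B. Proof. exact: (inS_gen _ _ _ _ _ _ j1). Qed.
Lemma inSC : inS 1 C. Proof. exact: (inS_gen _ _ _ _ _ _ j2). Qed.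
Lemma inSal : inS 1 al. Proof. exact: (inS_gen _ _ _ _ _ _ j3). Qed.
Lemma inSbe : inS 1 be. Proof. exact: (inS_gen _ _ _ _ _ _ j4). Qed.
Lemma inSga : inS 1 ga. Proof. exact: (inS_gen _ _ _ _ _ _ j5). Qed.

Lemma lc2 (a b : F) (u v : D) : inS 1 u -> inS 1 v -> inS 1 (a *: u + b *: v).
Proof. by move=> hu hv; apply: inS_add; apply: inS_scale. Qed.

Lemma cc_neq0 x y : cc x y != 0.
Proof.
rewrite /cc; repeat case: ifP => _; rewrite ?oner_eq0 ?expf_neq0 ?invr_eq0 ?expf_neq0 //.
Qed.

Lemma comm2 x y : inS 1 (gen x * gen y - cc x y *: (gen y * gen x)).
Proof.
have Z : forall u v : D, u * v = v * u -> inS 1 (u * v - 1 *: (v * u)).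
  by move=> u v ->; rewrite scale1r subrr; apply: inS0.
case: x => [[|[|[|[|[|[|//]]]]]] hx]; case: y => [[|[|[|[|[|[|//]]]]]] hy];
  rewrite /cc /gen /=;
  try (apply: Z; first [ by [] | by rewrite cal | by rewrite cbe | by rewrite cga ]).
- have -> : A * B - q ^- 2 *: (B * A) = (- (q ^- 2 * (q * t))) *: C + (q ^- 2 * (q * t / qq)) *: ga.
    by rewrite nBA; lin F; fin.
  by apply: lc2; [apply: inSC | apply: inSga].
- have -> : A * C - q ^+ 2 *: (C * A) = (q * t) *: B + (- (q ^+ 2 * (q^-1 * t / qq))) *: be.
    by rewrite nCA; lin F; fin.
  by apply: lc2; [apply: inSB' | apply: inSbe].
- have -> : B * A - q ^+ 2 *: (A * B) = (q * t) *: C + (- (q * t / qq)) *: ga.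
    by rewrite nBA; lin F; fin.
  by apply: lc2; [apply: inSC | apply: inSga].
- have -> : B * C - q ^- 2 *: (C * B) = (- (q ^- 2 * (q * t))) *: A + (q ^- 2 * (q * t / qq)) *: al.
    by rewrite nCB; lin F; fin.
  by apply: lc2; [apply: inSA | apply: inSal].
- have -> : C * A - q ^- 2 *: (A * C) = (- (q^-1 * t)) *: B + (q^-1 * t / qq) *: be.
    by rewrite nCA; lin F; fin.
  by apply: lc2; [apply: inSB' | apply: inSbe].
- have -> : C * B - q ^+ 2 *: (B * C) = (q * t) *: A + (- (q * t / qq)) *: al.
    by rewrite nCB; lin F; fin.
  by apply: lc2; [apply: inSA | apply: inSal].
Qed.

Ltac ncs := rewrite ?mulrDr ?mulrDl ?mulrBr ?mulrBl ?mulrN ?mulNr -?scalerAr -?scalerAl ?mulrA.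

Lemma wcomm w y : inS (size w)
  (wordval w * gen y - (\prod_(x <- w) cc x y) *: (gen y * wordval w)).
Proof.
elim: w => [|x w IH].
  by rewrite big_nil wordval_nil mulr1 mul1r scale1r subrr; apply: inS0.
rewrite wordval_cons big_cons.
set P := \prod_(j <- w) cc j y.
have -> : gen x * wordval w * gen y - (cc x y * P) *: (gen y * (gen x * wordval w)) =
   gen x * (wordval w * gen y - P *: (gen y * wordval w))
   + P *: ((gen x * gen y - cc x y *: (gen y * gen x)) * wordval w).
  by ncs; lin F; repeat split; ring.
apply: inS_add; first by apply: inS_mul1l => //; apply: inS_gen.
by apply: inS_scale; apply: inS_mul1l; [apply: comm2 | apply: inS_w].
Qed.

Fixpoint insK (x : 'I_6) (s : seq 'I_6) : F :=
  if s is y :: s' then (if leo x y then 1 else cc x y * insK x s') else 1.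

Lemma insK_neq0 x s : insK x s != 0.
Proof.
elim: s => [|y s IH] /=; first exact: oner_neq0.
by case: ifP => _; rewrite ?oner_neq0 // mulf_neq0 // cc_neq0.
Qed.

Lemma ins_comm x s : inS (size s) (gen x * wordval s - insK x s *: wordval (ins x s)).
Proof.
elim: s => [|y s IH] /=.
  by rewrite wordval1 wordval_nil mulr1 scale1r subrr; apply: inS0.
case: ifP => _.
  by rewrite scale1r [wordval (x :: _)]wordval_cons subrr; apply: inS0.
rewrite !wordval_cons.
have -> : gen x * (gen y * wordval s) - (cc x y * insK x s) *: (gen y * wordval (ins x s)) =
   (gen x * gen y - cc x y *: (gen y * gen x)) * wordval s
   + cc x y *: (gen y * (gen x * wordval s - insK x s *: wordval (ins x s))).
  by ncs; lin F; repeat split; ring.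
apply: inS_add; first by apply: inS_mul1l; [apply: comm2 | apply: inS_w].
by apply: inS_scale; apply: inS_mul1l => //; apply: inS_gen.
Qed.

Fixpoint sortK (w : seq 'I_6) : F :=
  if w is x :: w' then sortK w' * insK x (isort w') else 1.

Lemma sortK_neq0 w : sortK w != 0.
Proof.
elim: w => [|x w IH] /=; first exact: oner_neq0.
by rewrite mulf_neq0 // insK_neq0.
Qed.

Lemma sort_comm w : inS (size w).-1 (wordval w - sortK w *: wordval (isort w)).
Proof.
elim: w => [|x w IH] /=.
  by rewrite scale1r subrr; apply: inS0.
case: w IH => [|y w] IH /=.
  by rewrite mul1r scale1r subrr; apply: inS0.
rewrite wordval_cons -/(isort (y :: w)).
set w' := y :: w; set s := isort w'.
have -> : gen x * wordval w' - (sortK w' * insK x s) *: wordval (ins x s) =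
   gen x * (wordval w' - sortK w' *: wordval s)
   + sortK w' *: (gen x * wordval s - insK x s *: wordval (ins x s)).
  by ncs; lin F; repeat split; ring.
apply: inS_add.
  by apply: inS_mul1l => //; apply: inS_gen.
by apply: inS_scale; move: (ins_comm x s); rewrite /s size_isort.
Qed.

Definition mon m := wordval (mw m).

Lemma mon_ins x m : inS (mdeg m) (gen x * mon m - insK x (mw m) *: mon (m + U_(x))%MM).
Proof. by rewrite /mon -ins_mw -size_mw; apply: ins_comm. Qed.

Lemma mon_comm y m : inS (mdeg m)
  (mon m * gen y - (\prod_(i < 6) cc i y ^+ m i) *: (gen y * mon m)).
Proof.
rewrite /mon -size_mw.
have -> : \prod_(i < 6) cc i y ^+ m i = \prod_(x <- mw m) cc x y.
  by rewrite [RHS]prod_count; apply: eq_bigr => i _; rewrite count_mw.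
exact: wcomm.
Qed.

Lemma word_mon w : inS (size w).-1 (wordval w - sortK w *: mon (cnt w)).
Proof. by rewrite /mon -isort_mw; apply: sort_comm. Qed.

End Straight.

End D2.
Import D2.

Module D3.
Import ring.
Import ssrcomplements mpoly.
Import zify.
Import GRing.Theory.
Local Open Scope ring_scope.

Lemma prod6 (R : comNzRingType) (f : 'I_6 -> R) :
  \prod_(i < 6) f i = f j0 * f j1 * f j2 * f j3 * f j4 * f j5.
Proof.
rewrite !big_ord_recl big_ord0 mulr1 !mulrA.
by congr (_ * _ * _ * _ * _ * _); congr f; apply: val_inj.
Qed.

Lemma sum6 (f : 'I_6 -> nat) :
  (\sum_(i < 6) f i = f j0 + f j1 + f j2 + f j3 + f j4 + f j5)%N.
Proof.
rewrite !big_ord_recl big_ord0 addn0 !addnA.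
by congr (_ + _ + _ + _ + _ + _)%N; congr f; apply: val_inj.
Qed.

Lemma mdeg6 (m : 'X_{1..6}) : mdeg m = (m j0 + m j1 + m j2 + m j3 + m j4 + m j5)%N.
Proof. by rewrite mdegE sum6. Qed.

Lemma mdeg_cnt w : mdeg (cnt w) = size w.
Proof. by rewrite mdegE size_count; apply: eq_bigr => i _; rewrite mnmE. Qed.

Lemma count_flatten_nseq (T : eqType) (a : pred T) k (l : seq T) :
  count a (flatten (nseq k l)) = (k * count a l)%N.
Proof. by elim: k => [//|k IH] /=; rewrite count_cat IH mulSn. Qed.

Lemma expf_inj (F : fieldType) (q : F) : q != 0 ->
  (forall n, (0 < n)%N -> q ^+ n != 1) -> forall a b, q ^+ a = q ^+ b -> a = b.
Proof.
move=> hq hr.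
suff H : forall a b, (a <= b)%N -> q ^+ a = q ^+ b -> a = b.
  by move=> a b; case: (leqP a b) => h e; [exact: H | apply/esym/H => //; exact: ltnW].
move=> a b hab e; apply/eqP; rewrite eqn_leq hab /=; apply: contraT; rewrite -ltnNge => lt.
have h1 : (0 < b - a)%N by rewrite subn_gt0.
have e1 : q ^+ (b - a) = 1.
  have : q ^+ a * q ^+ (b - a) = q ^+ a * 1 by rewrite -exprD subnKC // mulr1.
  by apply: mulfI; rewrite expf_neq0.
by move: (hr _ h1); rewrite e1 eqxx.
Qed.

Section Center.
Variables (F : fieldType) (q : F) (D : algType F) (A B C al be ga : D).
Hypothesis hq : q != 0.
Hypothesis hq4 : q ^+ 4 != 1.
Hypothesis hroot : forall n, (0 < n)%N -> q ^+ n != 1.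
Hypothesis cal : central al.
Hypothesis cbe : central be.
Hypothesis cga : central ga.
Local Notation t := (q ^+ 2 - q ^- 2).
Local Notation qq := (q + q^-1).
Hypothesis nBA : B * A = q ^+ 2 *: (A * B) + (q * t) *: C - (q * t / qq) *: ga.
Hypothesis nCA : C * A = q ^- 2 *: (A * C) - (q^-1 * t) *: B + (q^-1 * t / qq) *: be.
Hypothesis nCB : C * B = q ^+ 2 *: (B * C) + (q * t) *: A - (q * t / qq) *: al.
Hypothesis gen_all : forall x : D, in_subalg [:: A; B; C] x.

Local Notation gen := (gen A B C al be ga).
Local Notation wordval := (wordval A B C al be ga).
Local Notation inS := (inS A B C al be ga).
Local Notation mon := (mon A B C al be ga).
Local Notation Om := (Om q A B C al be ga).
Local Notation G := [:: Om; al; be; ga].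

Let ht' : t != 0. Proof. by apply: ht. Qed.
Let hqq' : qq != 0. Proof. by apply: hqq. Qed.
Let hq4'' : (q * q) ^+ 2 - 1 != 0. Proof. by apply: hq4'. Qed.
Let hq2'' : q * q + 1 != 0. Proof. by apply: hq2'. Qed.
Ltac fin := repeat split; field; rewrite ?hq4'' ?hq2'' ?ht' ?hqq' ?hq //; match goal with |- ?g => idtac "LEFT" g end.

Lemma central_gens (x : D) : x * A = A * x -> x * B = B * x -> x * C = C * x -> central x.
Proof.
move=> hA hB hC y; elim: (gen_all y).
- by move=> g; rewrite !inE => /or3P [] /eqP ->.
- by rewrite mulr1 mul1r.
- by move=> u v _ hu _ hv; rewrite mulrDr mulrDl hu hv.
- by move=> u v _ hu _ hv; rewrite mulrA hu -mulrA hv mulrA.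
- by move=> c u _ hu; rewrite -scalerAr hu scalerAl.
Qed.

Lemma nAB : A * B = q ^- 2 *: (B * A) - (q^-1 * t) *: C + (q^-1 * t / qq) *: ga.
Proof. by rewrite nBA; lin F; fin. Qed.
Lemma nAC : A * C = q ^+ 2 *: (C * A) + (q * t) *: B - (q * t / qq) *: be.
Proof. by rewrite nCA; lin F; fin. Qed.
Lemma nBC : B * C = q ^- 2 *: (C * B) - (q^-1 * t) *: A + (q^-1 * t / qq) *: al.
Proof. by rewrite nCB; lin F; fin. Qed.

Lemma Om_central : central Om.
Proof.
apply: central_gens.
- by rewrite (Omega_commA hq hq4 cal cbe cga nBA nCA nCB).
- rewrite (@Omega_cyc _ _ _ A B C al be ga hq hq4 cga nBA nCA).
  by rewrite (Omega_commA hq hq4 cbe cga cal nCB nAB nAC).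
- rewrite (@Omega_cyc _ _ _ A B C al be ga hq hq4 cga nBA nCA).
  rewrite (@Omega_cyc _ _ _ B C A be ga al hq hq4 cal nCB nAB).
  by rewrite (Omega_commA hq hq4 cga cal cbe nAC nBC nBA).
Qed.

Ltac ncs := rewrite ?mulrDr ?mulrDl ?mulrBr ?mulrBl ?mulrN ?mulNr -?scalerAr -?scalerAl ?mulrA.

Let mon_ins' := mon_ins hq hq4 cal cbe cga nBA nCA nCB.
Let mon_comm' := mon_comm hq hq4 cal cbe cga nBA nCA nCB.
Let word_mon' := word_mon hq hq4 cal cbe cga nBA nCA nCB.

Let iA : inS 1 A := inS_gen A B C al be ga j0.
Let iB : inS 1 B := inS_gen A B C al be ga j1.
Let iC : inS 1 C := inS_gen A B C al be ga j2.
Let ial : inS 1 al := inS_gen A B C al be ga j3.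
Let ibe : inS 1 be := inS_gen A B C al be ga j4.
Let iga : inS 1 ga := inS_gen A B C al be ga j5.

Lemma central_add (x y : D) : central x -> central y -> central (x + y).
Proof. by move=> hx hy z; rewrite mulrDl mulrDr hx hy. Qed.
Lemma central_mul (x y : D) : central x -> central y -> central (x * y).
Proof. by move=> hx hy z; rewrite -mulrA hy mulrA hx mulrA. Qed.
Lemma central_sc c (x : D) : central x -> central (c *: x).
Proof. by move=> hx z; rewrite -scalerAl hx scalerAr. Qed.
Lemma central_one : @central D 1.
Proof. by move=> z; rewrite mulr1 mul1r. Qed.

Lemma subalg_central x : in_subalg G x -> central x.
Proof.
elim.
- move=> g; rewrite !inE => /or4P [] /eqP ->; [exact: Om_central | exact: cal | exact: cbe | exact: cga].
- exact: central_one.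
- by move=> u v _ hu _ hv; apply: central_add.
- by move=> u v _ hu _ hv; apply: central_mul.
- by move=> c u _ hu; apply: central_sc.
Qed.

Lemma subalg0 : in_subalg G 0.
Proof. by rewrite -(scale0r 1); apply/sa_scale/sa_one. Qed.

Lemma subalg_sub x y : in_subalg G x -> in_subalg G y -> in_subalg G (x - y).
Proof. by move=> hx hy; apply: sa_add => //; rewrite -scaleN1r; apply: sa_scale. Qed.

Lemma subalg_pow x k : in_subalg G x -> in_subalg G (x ^+ k).
Proof. by move=> hx; elim: k => [|k IH]; [apply: sa_one | rewrite exprS; apply: sa_mul]. Qed.

Lemma all_inS x : exists d, inS d x.
Proof.
elim: (gen_all x).
- move=> g; rewrite !inE => /or3P [] /eqP ->; exists 1%N; [exact: iA | exact: iB | exact: iC].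
- by exists 0%N; apply: inS_one.
- move=> u v _ [d1 h1] _ [d2 h2]; exists (maxn d1 d2).
  by apply: inS_add; apply: inS_le h1 || apply: inS_le h2; rewrite ?leq_maxl ?leq_maxr.
- by move=> u v _ [d1 h1] _ [d2 h2]; exists (d1 + d2)%N; apply: inS_mul.
- by move=> c u _ [d h]; exists d; apply: inS_scale.
Qed.

Variable phi : D -> {mpoly F[6]}.
Hypothesis phiD : forall x y, phi (x + y) = phi x + phi y.
Hypothesis phiZ : forall c x, phi (c *: x) = c *: phi x.
Hypothesis phi_mon : forall m, phi (mon m) = 'X_[m].
Hypothesis phi_deg : forall d x, inS d x -> (msize (phi x) <= d.+1)%N.

Lemma phi0 : phi 0 = 0.
Proof. by have := phiZ 0 0; rewrite !scale0r. Qed.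

Lemma phi_sum I (r : seq I) (P : pred I) (f : I -> D) :
  phi (\sum_(i <- r | P i) f i) = \sum_(i <- r | P i) phi (f i).
Proof.
elim: r => [|a r IH]; first by rewrite !big_nil phi0.
by rewrite !big_cons; case: ifP => // _; rewrite phiD IH.
Qed.

Lemma indep n (e : 'X_{1..6} -> F) (x : 'I_6) :
  inS n.+1 (\sum_(m : 'X_{1..6 < n.+2} | mdeg m == n.+1) e m *: mon (m + U_(x))%MM) ->
  forall m : 'X_{1..6 < n.+2}, mdeg m == n.+1 -> e m = 0.
Proof.
move=> /phi_deg; rewrite phi_sum => hs m0 hm0.
have : (\sum_(m : 'X_{1..6 < n.+2} | mdeg m == n.+1) phi (e m *: mon (m + U_(x))%MM))@_(m0 + U_(x))%MM = 0.
  apply: memN_msupp_eq0; apply: msize_mdeg_ge; rewrite mdegD mdeg1 (eqP hm0) addn1.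
  exact: hs.
rewrite raddf_sum (bigD1 m0) //= phiZ phi_mon mcoeffZ mcoeffX eqxx mulr1.
rewrite big1 ?addr0 // => m /andP [_ hm]; rewrite phiZ phi_mon mcoeffZ mcoeffX.
by rewrite eqm_add2r -bmeqP (negbTE hm) mulr0.
Qed.

Lemma dec n x : inS n.+1 x -> exists c : 'X_{1..6} -> F,
  inS n (x - \sum_(m : 'X_{1..6 < n.+2} | mdeg m == n.+1) c m *: mon m).
Proof.
elim=> [w hw|x1 y1 _ [c1 h1] _ [c2 h2]|k x1 _ [c1 h1]].
- case: (ltnP (size w) n.+1) => hs.
    exists (fun _ => 0); rewrite big1 ?subr0; first by apply: inS_w.
    by move=> m _; rewrite scale0r.
  have e : size w = n.+1 by apply/eqP; rewrite eqn_leq hw hs.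
  exists (fun m => if m == cnt w then sortK q w else 0).
  have hb : (mdeg (cnt w) < n.+2)%N by rewrite mdeg_cnt e.
  rewrite (bigD1 (BMultinom hb)) /=; last by rewrite mdeg_cnt e.
  rewrite eqxx big1 ?addr0; first by move: (word_mon' w); rewrite e.
  move=> m /andP [_ hm]; case: ifP; last by rewrite scale0r.
  by move=> /eqP hm'; move: hm; rewrite -(inj_eq val_inj) /= hm' eqxx.
- exists (fun m => c1 m + c2 m).
  have -> : x1 + y1 - \sum_(m : 'X_{1..6 < n.+2} | mdeg m == n.+1) (c1 m + c2 m) *: mon m =
     (x1 - \sum_(m : 'X_{1..6 < n.+2} | mdeg m == n.+1) c1 m *: mon m) +
     (y1 - \sum_(m : 'X_{1..6 < n.+2} | mdeg m == n.+1) c2 m *: mon m).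
    rewrite (eq_bigr (fun m : 'X_{1..6 < n.+2} => c1 m *: mon m + c2 m *: mon m)); last first.
      by move=> m _; rewrite scalerDl.
    by rewrite big_split /= opprD addrACA.
  exact: inS_add.
- exists (fun m => k * c1 m).
  have -> : k *: x1 - \sum_(m : 'X_{1..6 < n.+2} | mdeg m == n.+1) (k * c1 m) *: mon m =
     k *: (x1 - \sum_(m : 'X_{1..6 < n.+2} | mdeg m == n.+1) c1 m *: mon m).
    rewrite scalerBr scaler_sumr; congr (_ - _); apply: eq_bigr => m _.
    by rewrite scalerA.
  exact: inS_scale.
Qed.

Definition Pc (x : 'I_6) (m : 'X_{1..6}) := \prod_(i < 6) cc q i x ^+ m i.

Lemma top_comm n z (c : 'X_{1..6} -> F) x : central z ->
  inS n (z - \sum_(m : 'X_{1..6 < n.+2} | mdeg m == n.+1) c m *: mon m) ->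
  inS n.+1 (\sum_(m : 'X_{1..6 < n.+2} | mdeg m == n.+1)
      (c m * (1 - Pc x m) * insK q x (mw m)) *: mon (m + U_(x))%MM).
Proof.
move=> hz hr.
set h := \sum_(m : 'X_{1..6 < n.+2} | mdeg m == n.+1) c m *: mon m.
pose Dl (m : 'X_{1..6}) := (gen x * mon m - insK q x (mw m) *: mon (m + U_(x))%MM)
   - (mon m * gen x - Pc x m *: (gen x * mon m))
   - Pc x m *: (gen x * mon m - insK q x (mw m) *: mon (m + U_(x))%MM).
have e1 : \sum_(m : 'X_{1..6 < n.+2} | mdeg m == n.+1)
      (c m * (1 - Pc x m) * insK q x (mw m)) *: mon (m + U_(x))%MM =
   \sum_(m : 'X_{1..6 < n.+2} | mdeg m == n.+1) c m *: (gen x * mon m - mon m * gen x)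
   - \sum_(m : 'X_{1..6 < n.+2} | mdeg m == n.+1) c m *: Dl m.
  rewrite -sumrB; apply: eq_bigr => m _; rewrite /Dl.
  by lin F; repeat split; ring.
have e2 : \sum_(m : 'X_{1..6 < n.+2} | mdeg m == n.+1) c m *: (gen x * mon m - mon m * gen x)
   = gen x * h - h * gen x.
  rewrite /h mulr_sumr mulr_suml -sumrB; apply: eq_bigr => m _.
  by rewrite -scalerAr -scalerAl scalerBr.
have e3 : gen x * h - h * gen x = - (gen x * (z - h) - (z - h) * gen x).
  rewrite mulrBr mulrBl -(hz (gen x)).
  by lin F; repeat split; ring.
rewrite e1 e2 e3; apply: inSB; first apply: inSN; first apply: inSB.
- by apply: inS_mul1l => //; apply: inS_gen.
- by apply: inS_mul1r => //; apply: inS_gen.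
apply: inS_sum => m hm; apply: inS_scale; rewrite /Dl.
have hd : mdeg m = n.+1 by apply/eqP.
apply: inSB; first apply: inSB.
- by move: (mon_ins' x m); rewrite hd.
- by move: (mon_comm' x m); rewrite hd.
by apply: inS_scale; move: (mon_ins' x m); rewrite hd.
Qed.

Lemma top_P n z (c : 'X_{1..6} -> F) x : central z ->
  inS n (z - \sum_(m : 'X_{1..6 < n.+2} | mdeg m == n.+1) c m *: mon m) ->
  forall m : 'X_{1..6 < n.+2}, mdeg m == n.+1 -> c m != 0 -> Pc x m = 1.
Proof.
move=> hz hr m hm nz.
have := @indep n (fun m => c m * (1 - Pc x m) * insK q x (mw m)) x (top_comm x hz hr) m hm.
move/eqP; rewrite !mulf_eq0 (negbTE nz) (negbTE (insK_neq0 hq _ _)) orbF /=.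
by rewrite subr_eq0 => /eqP <-.
Qed.

Lemma Pc_A m : Pc j0 m = (q ^+ 2) ^+ (m j1) * (q ^- 2) ^+ (m j2).
Proof. by rewrite /Pc prod6 /cc /= !expr1n !mulr1 mul1r. Qed.
Lemma Pc_C m : Pc j2 m = (q ^+ 2) ^+ (m j0) * (q ^- 2) ^+ (m j1).
Proof. by rewrite /Pc prod6 /cc /= !expr1n !mulr1. Qed.

Lemma eq_of_P a b : (q ^+ 2) ^+ a * (q ^- 2) ^+ b = 1 -> a = b.
Proof.
move=> e.
have e' : q ^+ (2 * a) = q ^+ (2 * b).
  rewrite !exprM; apply: (mulIf (x := (q ^- 2) ^+ b)); first by rewrite expf_neq0 // invr_eq0 expf_neq0.
  by rewrite e exprVn mulfV // expf_neq0 // expf_neq0.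
by have := expf_inj hq hroot e' => /eqP; rewrite eqn_pmul2l // => /eqP.
Qed.

Lemma top_diag n z (c : 'X_{1..6} -> F) : central z ->
  inS n (z - \sum_(m : 'X_{1..6 < n.+2} | mdeg m == n.+1) c m *: mon m) ->
  forall m : 'X_{1..6 < n.+2}, mdeg m == n.+1 -> c m != 0 -> m j0 = m j1 /\ m j1 = m j2.
Proof.
move=> hz hr m hm nz; split.
- by apply: eq_of_P; rewrite -Pc_C; apply: (top_P _ hz hr hm nz).
- by apply: eq_of_P; rewrite -Pc_A; apply: (top_P _ hz hr hm nz).
Qed.

Lemma wordval_nseq k (x : 'I_6) : wordval (nseq k x) = gen x ^+ k.
Proof. by elim: k => [|k IH]; rewrite ?wordval_nil ?expr0 // /= wordval_cons IH exprS. Qed.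

Lemma wordval3 : wordval [:: j0; j1; j2] = A * B * C.
Proof. by rewrite !wordval_cons wordval_nil mulr1 mulrA. Qed.

Lemma Om_minus : inS 2 (Om - q *: wordval [:: j0; j1; j2]).
Proof.
rewrite wordval3.
have -> : Om - q *: (A * B * C) = q ^+ 2 *: (A * A) + q ^- 2 *: (B * B) + q ^+ 2 *: (C * C)
   - q *: (A * al) - q^-1 *: (B * be) - q *: (C * ga) by rewrite /Om; lin F; fin.
by repeat apply: inSB || apply: inS_add || apply: inS_scale; apply: (inS_mul (a := 1)).
Qed.

Lemma Om_in3 : inS 3 Om.
Proof.
have -> : Om = (Om - q *: wordval [:: j0; j1; j2]) + q *: wordval [:: j0; j1; j2].
  by rewrite subrK.
apply: inS_add; first exact: (inS_le _ Om_minus).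
by apply/inS_scale/inS_w.
Qed.

Lemma Om_pow k : inS (3 * k) (Om ^+ k).
Proof.
elim: k => [|k IH]; first by rewrite expr0; apply: inS_one.
by rewrite exprS mulnS; apply: inS_mul => //; apply: Om_in3.
Qed.

Lemma powOm k : inS (3 * k).+2
  (Om ^+ k.+1 - q ^+ k.+1 *: wordval (flatten (nseq k.+1 [:: j0; j1; j2]))).
Proof.
elim: k => [|k IH].
  by rewrite expr1; apply: Om_minus.
set w3 := wordval [:: j0; j1; j2]; set wk := wordval (flatten (nseq k.+1 [:: j0; j1; j2])).
have -> : wordval (flatten (nseq k.+2 [:: j0; j1; j2])) = w3 * wk by rewrite /w3 /wk -wordval_cat.
have -> : Om ^+ k.+2 - q ^+ k.+2 *: (w3 * wk) =
   (Om - q *: w3) * Om ^+ k.+1 + q *: (w3 * (Om ^+ k.+1 - q ^+ k.+1 *: wk)).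
  rewrite [Om ^+ k.+2]exprS [q ^+ k.+2]exprS.
  have gid : forall (O P X Y : D) (a b : F),
      O * P - (a * b) *: (X * Y) = (O - a *: X) * P + a *: (X * (P - b *: Y)).
    by move=> O P X Y a b; ncs; lin F; repeat split; ring.
  exact: gid.
apply: inS_add.
  have -> : (3 * k.+1).+2 = (2 + 3 * k.+1)%N by rewrite addnC addn2.
  by apply: inS_mul; [apply: Om_minus | apply: Om_pow].
apply: inS_scale; have -> : (3 * k.+1).+2 = (3 + (3 * k).+2)%N by rewrite mulnS; lia.
by apply: inS_mul => //; apply: inS_w.
Qed.

Lemma recon n (m : 'X_{1..6}) : mdeg m = n.+1 -> m j0 = m j1 -> m j1 = m j2 ->
  exists W, in_subalg G W /\ inS n (mon m - W).
Proof.
move=> hd e01 e12; set k := m j0.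
set wc := nseq (m j3) j3 ++ nseq (m j4) j4 ++ nseq (m j5) j5.
set u := flatten (nseq k [:: j0; j1; j2]) ++ wc.
have hcnt : cnt u = m.
  apply/mnmP => i; rewrite mnmE !count_cat count_flatten_nseq !count_nseq.
  have E : i = j0 \/ i = j1 \/ i = j2 \/ i = j3 \/ i = j4 \/ i = j5.
    by case: i => [[|[|[|[|[|[|//]]]]]] hi]; [left|right;left|right;right;left|do 3 right; left
      |do 4 right; left|do 5 right]; apply: val_inj.
  by case: E => [->|[->|[->|[->|[->|->]]]]] /=; rewrite ?mul0n ?mul1n ?addn0 ?add0n ?muln1 ?muln0 /k -?e12 -?e01.
have hsize : size u = n.+1 by rewrite -mdeg_cnt hcnt.
have hu := word_mon' u; rewrite hcnt hsize /= in hu.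
set W0 := Om ^+ k * wordval wc.
have hW0 : inS n (W0 - q ^+ k *: wordval u).
  rewrite /u wordval_cat /W0; have [k0|kpos] := posnP k.
    by rewrite k0 expr0 /= wordval_nil !mul1r scale1r subrr; apply: inS0.
  have [k' ek] : exists k', k = k'.+1 by exists k.-1; rewrite prednK.
  rewrite ek.
  have -> : Om ^+ k'.+1 * wordval wc - q ^+ k'.+1 *: (wordval (flatten (nseq k'.+1 [:: j0; j1; j2])) * wordval wc)
     = (Om ^+ k'.+1 - q ^+ k'.+1 *: wordval (flatten (nseq k'.+1 [:: j0; j1; j2]))) * wordval wc.
    by rewrite mulrBl scalerAl.
  have hs : size wc = (m j3 + m j4 + m j5)%N by rewrite !size_cat !size_nseq addnA.
  have -> : n = ((3 * k').+2 + size wc)%N.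
    move: hd; rewrite mdeg6 hs -e12 -e01 -/k ek; lia.
  by apply: inS_mul; [apply: powOm | apply: inS_w].
have hK : sortK q u != 0 by apply: sortK_neq0.
have hqk : q ^+ k != 0 by apply: expf_neq0.
exists ((q ^+ k * sortK q u)^-1 *: W0); split.
  apply: sa_scale; apply: sa_mul; first by apply: subalg_pow; apply: sa_gen; rewrite inE eqxx.
  rewrite /wc !wordval_cat !wordval_nseq; apply: sa_mul; last apply: sa_mul;
    apply: subalg_pow; apply: sa_gen; rewrite !inE eqxx ?orbT //.
have -> : mon m - (q ^+ k * sortK q u)^-1 *: W0 =
   (q ^+ k * sortK q u)^-1 *: (- (q ^+ k *: (wordval u - sortK q u *: mon m))
     - (W0 - q ^+ k *: wordval u)).
  by lin F; repeat split; field; rewrite hK hqk.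
by apply: inS_scale; apply: inSB; [apply: inSN; apply: inS_scale | ].
Qed.

Lemma sum_recon n I (r : seq I) (Pm : pred I) (f : I -> D) :
  (forall i, Pm i -> exists W, in_subalg G W /\ inS n (f i - W)) ->
  exists W, in_subalg G W /\ inS n (\sum_(i <- r | Pm i) f i - W).
Proof.
move=> H; elim: r => [|a r [W [h1 h2]]].
  by exists 0; rewrite big_nil subr0; split; [apply: subalg0 | apply: inS0].
rewrite big_cons; case: ifP => Pa; last by exists W.
have [W' [h1' h2']] := H a Pa.
exists (W' + W); split; first exact: sa_add.
have -> : f a + \sum_(i <- r | Pm i) f i - (W' + W) = (f a - W') + (\sum_(i <- r | Pm i) f i - W).
  by rewrite opprD addrACA.
exact: inS_add.
Qed.

Lemma main_ind n z : inS n z -> central z -> in_subalg G z.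
Proof.
elim: n z => [|n IH] z.
  move=> hz _; elim: hz => [w hw|x y _ hx _ hy|c x _ hx].
  - by case: w hw => // _; rewrite wordval_nil; apply: sa_one.
  - exact: sa_add.
  - exact: sa_scale.
move=> hz cz; have [c hc] := dec hz.
set h := \sum_(m : 'X_{1..6 < n.+2} | mdeg m == n.+1) c m *: mon m.
have [W [hW hW']] : exists W, in_subalg G W /\ inS n (h - W).
  apply: sum_recon => m hm.
  have [->|nz] := eqVneq (c m) 0.
    by exists 0; rewrite scale0r subr0; split; [apply: subalg0 | apply: inS0].
  have [e1 e2] := top_diag cz hc hm nz.
  have [W0 [h1 h2]] := recon (eqP hm) e1 e2.
  exists (c m *: W0); split; first exact: sa_scale.
  by rewrite -scalerBr; apply: inS_scale.
have hzW : inS n (z - W).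
  have -> : z - W = (z - h) + (h - W) by rewrite addrA subrK.
  exact: inS_add.
have czW : central (z - W).
  apply: central_add => //; rewrite -scaleN1r; apply: central_sc.
  exact: subalg_central.
have := IH _ hzW czW => hzW'.
by rewrite -(subrK W z); apply: sa_add.
Qed.

Theorem center_iff z : central z <-> in_subalg G z.
Proof.
split; last exact: subalg_central.
by move=> cz; have [d hd] := all_inS z; apply: main_ind hd cz.
Qed.

End Center.

End D3.
Import D3.

Module Final.
Import ring.
Import boolp.
Import ssrcomplements mpoly.
Import GRing.Theory.
Local Open Scope ring_scope.

Section Final.
Variables (F : fieldType) (q : F).
Hypothesis hq : q != 0.
Hypothesis hq4 : q ^+ 4 != 1.
Local Notation t := (q ^+ 2 - q ^- 2).
Local Notation qq := (q + q^-1).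
Local Notation V := {mpoly F[6]}.

Let p := q ^+ 2.
Let k2 := q * t.
Let k3 := - (q * t / qq).
Let k5 := - (q^-1 * t).
Let k6 := q^-1 * t / qq.
Let k8 := q * t.
Let k9 := - (q * t / qq).
Let p0 : p != 0. Proof. by rewrite expf_neq0. Qed.

Local Notation opA := (@opA F).
Local Notation opB := (opB p k2 k3 k5 k6 k8 k9).
Local Notation opC := (opC p k2 k3 k5 k6 k8 k9).
Local Notation opX := (@opX F).

Program Definition ea : endo F := @Endo F opA _ _ _.
Next Obligation. exact: opAD. Qed.
Next Obligation. exact: opAZ. Qed.
Next Obligation. by rewrite /R2.opA mulrCA. Qed.
Program Definition eb : endo F := @Endo F opB _ _ _.
Next Obligation. exact: opBD. Qed.
Next Obligation. exact: opBZ. Qed.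
Next Obligation. by rewrite -!/(R2.opX _ _) opB_Xk. Qed.
Program Definition ec : endo F := @Endo F opC _ _ _.
Next Obligation. exact: opCD. Qed.
Next Obligation. exact: opCZ. Qed.
Next Obligation. by rewrite -!/(R2.opX _ _) opC_Xk. Qed.
Program Definition ex (k : 'I_6) : endo F := @Endo F (opX k) _ _ _.
Next Obligation. exact: opXD. Qed.
Next Obligation. exact: opXZ. Qed.
Next Obligation. by rewrite /R2.opX mulrCA. Qed.

Lemma ex_central (k : 'I_6) : (3 <= k)%N -> central (ex k).
Proof.
move=> hk y; apply: endo_ext => v; rewrite !endo_mulE /=.
by rewrite /R2.opX ef_cent.
Qed.

Let ht' : t != 0. Proof. by apply: ht. Qed.
Let hqq' : qq != 0. Proof. by apply: hqq. Qed.
Let hq4'' : (q * q) ^+ 2 - 1 != 0. Proof. by apply: hq4'. Qed.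
Let hq2'' : q * q + 1 != 0. Proof. by apply: hq2'. Qed.
Ltac fin := repeat split; field; rewrite ?hq4'' ?hq2'' ?ht' ?hqq' ?hq //; match goal with |- ?g => idtac "LEFT" g end.

Lemma cA_eq : aw_cA q ea eb ec = qq^-1 *: ex i3.
Proof.
apply: endo_ext => v; rewrite /aw_cA !(endo_addE, endo_scaleE, endo_mulE, endo_oppE) /=.
rewrite (RCB k2 k3 k5 k6 k8 k9 p0) /k8 /k9 /p.
by lin F; fin.
Qed.

Lemma cB_eq : aw_cB q ea eb ec = qq^-1 *: ex i4.
Proof.
apply: endo_ext => v; rewrite /aw_cB !(endo_addE, endo_scaleE, endo_mulE, endo_oppE) /=.
rewrite RCA /k5 /k6 /p.
by lin F; fin.
Qed.

Lemma cC_eq : aw_cC q ea eb ec = qq^-1 *: ex i5.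
Proof.
apply: endo_ext => v; rewrite /aw_cC !(endo_addE, endo_scaleE, endo_mulE, endo_oppE) /=.
rewrite RBA /k2 /k3 /p.
by lin F; fin.
Qed.

Lemma relsE : AW_rels q ea eb ec.
Proof.
by split; rewrite ?cA_eq ?cB_eq ?cC_eq; apply: central_scale; apply: ex_central.
Qed.

End Final.

Lemma cnt_cons x w : cnt (x :: w) = (cnt w + U_(x))%MM.
Proof. by apply/mnmP => i; rewrite mnmDE mnm1E !mnmE /= addnC. Qed.

Lemma cnt_zero x w (i : 'I_6) : all (leo x) w -> (val i < val x)%N -> cnt w i = 0%N.
Proof.
move=> H hi; rewrite mnmE; apply/count_memPn; apply/negP => hw.
by move/allP: H => /(_ _ hw); rewrite /leo leqNgt hi.
Qed.

Lemma cnt_nil : cnt [::] = 0%MM.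
Proof. by apply/mnmP => i; rewrite !mnmE. Qed.

Section Main.
Variables (F : fieldType) (q : F) (D : algType F) (A B C : D).
Hypothesis hq : q != 0.
Hypothesis hq4 : q ^+ 4 != 1.
Hypothesis hroot : forall n : nat, (0 < n)%N -> q ^+ n != 1.
Hypothesis huniv : is_universal_AW q A B C.
Local Notation t := (q ^+ 2 - q ^- 2).
Local Notation qq := (q + q^-1).
Local Notation al := (aw_alpha q A B C).
Local Notation be := (aw_beta q A B C).
Local Notation ga := (aw_gamma q A B C).
Local Notation opB := (opB (q ^+ 2) (q * t) (- (q * t / qq)) (- (q^-1 * t)) (q^-1 * t / qq) (q * t) (- (q * t / qq))).
Local Notation opC := (opC (q ^+ 2) (q * t) (- (q * t / qq)) (- (q^-1 * t)) (q^-1 * t / qq) (q * t) (- (q * t / qq))).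

Let hrel : AW_rels q A B C. Proof. by case: huniv. Qed.
Let hgen : forall x : D, in_subalg [:: A; B; C] x. Proof. by case: huniv. Qed.

Let fex : exists f : D -> endo F,
   [/\ alg_hom f, f A = ea F, f B = eb q & f C = ec q].
Proof. by case: huniv => _ _ H; apply: H; apply: relsE. Qed.

Theorem main_thm (z : D) : central z <->
  in_subalg [:: aw_Omega q A B C; aw_alpha q A B C; aw_beta q A B C; aw_gamma q A B C] z.
Proof.
have [f [[fD fM f1 fZ] fA fB fC]] := fex.
have fN : forall x, f (- x) = - f x by move=> x; rewrite -scaleN1r fZ scaleN1r.
have fB' : forall x y, f (x - y) = f x - f y by move=> x y; rewrite fD fN.
have hqq0 : qq != 0 by apply: hqq.
have fcA : f (aw_cA q A B C) = aw_cA q (f A) (f B) (f C).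
  by rewrite /aw_cA fD fZ fB' !fZ !fM.
have fcB : f (aw_cB q A B C) = aw_cB q (f A) (f B) (f C).
  by rewrite /aw_cB fD fZ fB' !fZ !fM.
have fcC : f (aw_cC q A B C) = aw_cC q (f A) (f B) (f C).
  by rewrite /aw_cC fD fZ fB' !fZ !fM.
have fal : f al = ex F i3.
  by rewrite /aw_alpha fZ fcA fA fB fC (cA_eq hq hq4) scalerA mulfV // scale1r.
have fbe : f be = ex F i4.
  by rewrite /aw_beta fZ fcB fA fB fC (cB_eq hq hq4) scalerA mulfV // scale1r.
have fga : f ga = ex F i5.
  by rewrite /aw_gamma fZ fcC fA fB fC (cC_eq hq hq4) scalerA mulfV // scale1r.
pose phi (x : D) : {mpoly F[6]} := f x 1.
have phiD : forall x y, phi (x + y) = phi x + phi y by move=> x y; rewrite /phi fD.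
have phiZ : forall c x, phi (c *: x) = c *: phi x by move=> c x; rewrite /phi fZ.
pose egen (i : 'I_6) : endo F := nth 0 [:: ea F; eb q; ec q; ex F i3; ex F i4; ex F i5] i.
have fgen : forall i, f (gen A B C al be ga i) = egen i.
  by case=> [[|[|[|[|[|[|//]]]]]] hi]; rewrite /gen /egen /=.
have phi_mul : forall i x, phi (gen A B C al be ga i * x) = egen i (phi x).
  by move=> i x; rewrite /phi fM fgen.
have phi_sorted : forall w, sorted leo w -> phi (wordval A B C al be ga w) = 'X_[cnt w].
  elim=> [|x w IH] hs.
    by rewrite wordval_nil /phi f1 cnt_nil mpolyX0.
  have hw : sorted leo w by move: hs; rewrite /=; apply: path_sorted.
  have hall : all (leo x) w by apply: (order_path_min leo_trans).
  rewrite wordval_cons phi_mul IH // cnt_cons.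
  case: x hs hall => [[|[|[|[|[|[|//]]]]]] hx] _ hall; rewrite /egen /=.
  - by rewrite opA_X; congr 'X_[_ + mnm1 _]; apply: val_inj.
  - rewrite opB_X bm_0; first by congr 'X_[_ + mnm1 _]; apply: val_inj.
    by apply: (cnt_zero hall).
  - rewrite opC_X cm_C; first by congr 'X_[_ + mnm1 _]; apply: val_inj.
    + by apply: (cnt_zero hall).
    + by apply: (cnt_zero hall).
  - by rewrite opX_X; congr 'X_[_ + mnm1 _]; apply: val_inj.
  - by rewrite opX_X; congr 'X_[_ + mnm1 _]; apply: val_inj.
  - by rewrite opX_X; congr 'X_[_ + mnm1 _]; apply: val_inj.
have phi_mon : forall m, phi (mon A B C al be ga m) = 'X_[m].
  by move=> m; rewrite /mon phi_sorted ?sorted_mw // cnt_mw.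
have phi_word : forall w, (msize (phi (wordval A B C al be ga w)) <= (size w).+1)%N.
  elim=> [|x w IH]; first by rewrite wordval_nil /phi f1 msize1.
  rewrite wordval_cons phi_mul /=; set v := phi _.
  have hop : (msize (egen x v) <= (msize v).+1)%N.
    case: x => [[|[|[|[|[|[|//]]]]]] hx]; rewrite /egen /=.
    - exact: msize_opA.
    - exact: msize_opB.
    - exact: msize_opC.
    - exact: msize_opX.
    - exact: msize_opX.
    - exact: msize_opX.
  by apply: leq_trans hop _; rewrite ltnS.
have phi_deg : forall d x, inS A B C al be ga d x -> (msize (phi x) <= d.+1)%N.
  move=> d x; elim=> [w hw|x1 y1 _ h1 _ h2|c x1 _ h1].
  - by apply: leq_trans (phi_word w) _.
  - by rewrite phiD; apply: leq_trans (msizeD_le _ _) _; rewrite geq_max h1 h2.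
  - by rewrite phiZ; apply: leq_trans (msizeZ_le _ _) _.
exact: (center_iff hq hq4 hroot (cal hrel) (cbe hrel) (cga hrel)
          (nBA A B C hq hq4) (nCA A B C hq hq4) (nCB A B C hq hq4) hgen
          phiD phiZ phi_mon phi_deg z).
Qed.

End Main.

End Final.
Import Final.

Theorem corollary8p3 (F : fieldType) (q : F) (D : algType F) (A B C : D) :
  q != 0 -> q ^+ 4 != 1 ->
  (forall n : nat, (0 < n)%N -> q ^+ n != 1) ->
  is_universal_AW q A B C ->
  forall z : D,
    central z <->
    in_subalg [:: aw_Omega q A B C; aw_alpha q A B C; aw_beta q A B C; aw_gamma q A B C] z.
Proof.
move=> hq hq4 hroot hu z.
exact: (Final.main_thm hq hq4 hroot hu z).
Qed.
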